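(* Let $P_1,P_2$ be distinct points of $D$, and let $v_1,v_2\in S^1$ be the endpoints of the chord through $P_1,P_2$, with $v_1$ closer to $P_1$ than to $P_2$. Let $n\in\mathbb Z_{>0}$. For $P\in D$ not on the line $P_1P_2$, define $$\tau_n(P)=\#\{w\in S^1 \mid w\neq v_1,v_2,\ P \text{ lies on the line through } w \text{ and } \psi_{P_1P_2}^{2n}(w)\}.$$ Then $\tau_n(P)=0$ if $\delta(P_1,P_2,P)<\Delta_n'(P_1,P_2)$, $\tau_n(P)=1$ if $\delta(P_1,P_2,P)=\Delta_n'(P_1,P_2)$, and $\tau_n(P)=2$ if $\delta(P_1,P_2,P)>\Delta_n'(P_1,P_2)$.
   Context: $D$ is the open unit disk in $\mathbb R^2$ and $S^1$ its boundary circle. For a closed convex $U\subset D$ and $v\in S^1$, $\psi_U(v)$ is the point $w\in S^1\setminus\{v\}$ such that the line $vw$ meets $U$ and $U$ lies in the closed half-plane to the left of the directed line from $v$ to $w$; $\psi_{P_1P_2}$ denotes $\psi_U$ for $U$ the closed segment $P_1P_2$. Regard $D$ as the Beltrami–Klein model (hyperbolic lines are chords). For distinct $P,Q\in D$ with chord endpoints $u_1,u_2\in S^1$, $d'(P,Q)=\tfrac12\left|\log\frac{|u_1Q||u_2P|}{|u_1P||u_2Q|}\right|$; $\Delta_n'(P,Q)=\log\frac{e^{n d'(P,Q)}+1}{e^{n d'(P,Q)}-1}$ for $n\in\mathbb Z_{>0}$; $\delta(P,Q,R)=\min\{d'(R,S): S \text{ on the chord through } P,Q\}$. *)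

(* Defs.v *)
From Stdlib Require Import Reals Lra List ClassicalEpsilon.
Import ListNotations.
Open Scope R_scope.

Definition point : Type := (R * R)%type.

Definition inD (P : point) : Prop := fst P ^ 2 + snd P ^ 2 < 1.
Definition onS1 (P : point) : Prop := fst P ^ 2 + snd P ^ 2 = 1.

Definition cross (A B C : point) : R :=
  (fst B - fst A) * (snd C - snd A) - (snd B - snd A) * (fst C - fst A).

Definition collinear (A B C : point) : Prop := cross A B C = 0.

Definition edist (A B : point) : R :=
  sqrt ((fst A - fst B) ^ 2 + (snd A - snd B) ^ 2).

Definition segment (P1 P2 : point) (X : point) : Prop :=
  exists t, 0 <= t <= 1 /\
    X = ((1 - t) * fst P1 + t * fst P2, (1 - t) * snd P1 + t * snd P2).

Definition psi_spec (U : point -> Prop) (v w : point) : Prop :=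
  onS1 w /\ w <> v /\ (exists X, U X /\ collinear v w X) /\
  (forall X, U X -> 0 <= cross v w X).

Definition psi (U : point -> Prop) (v : point) : point :=
  epsilon (inhabits v) (fun w => psi_spec U v w).

Definition psi_seg (P1 P2 : point) : point -> point := psi (segment P1 P2).

Definition iter_pt (f : point -> point) (k : nat) (v : point) : point :=
  Nat.iter k f v.

Definition chord_ends_spec (P Q : point) (u : point * point) : Prop :=
  onS1 (fst u) /\ onS1 (snd u) /\ fst u <> snd u /\
  collinear (fst u) (snd u) P /\ collinear (fst u) (snd u) Q.

Definition chord_ends (P Q : point) : point * point :=
  epsilon (inhabits (P, Q)) (chord_ends_spec P Q).

Definition dK (P Q : point) : R :=
  let u1 := fst (chord_ends P Q) in
  let u2 := snd (chord_ends P Q) in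
  / 2 * Rabs (ln ((edist u1 Q * edist u2 P) / (edist u1 P * edist u2 Q))).

Definition DeltaK (n : nat) (P Q : point) : R :=
  ln ((exp (INR n * dK P Q) + 1) / (exp (INR n * dK P Q) - 1)).

Definition is_delta (P Q Rp : point) (m : R) : Prop :=
  (exists S, inD S /\ collinear P Q S /\ dK Rp S = m) /\
  (forall S, inD S -> collinear P Q S -> m <= dK Rp S).

Definition delta (P Q Rp : point) : R :=
  epsilon (inhabits 0) (is_delta P Q Rp).

Definition has_card (A : point -> Prop) (k : nat) : Prop :=
  exists l : list point, NoDup l /\ length l = k /\ (forall w, A w <-> In w l).

Definition tau_set (P1 P2 v1 v2 : point) (n : nat) (P : point) (w : point) : Prop :=
  onS1 w /\ w <> v1 /\ w <> v2 /\
  let w' := iter_pt (psi_seg P1 P2) (2 * n) w in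
  w' <> w /\ collinear w w' P.

(* Main.v *)
Require Import Defs.
From Stdlib Require Import Reals Lra Lia Nsatz ClassicalEpsilon.
Open Scope R_scope.

Definition dot (A B : point) : R := fst A * fst B + snd A * snd B.

Lemma inD_m (P : point) : inD P <-> fst P * fst P + snd P * snd P < 1.
Proof. unfold inD; simpl; split; intro; lra. Qed.
Lemma onS1_m (P : point) : onS1 P <-> fst P * fst P + snd P * snd P = 1.
Proof. unfold onS1; simpl; split; intro; lra. Qed.

Definition sig (Q w : point) : point :=
  let Dx := fst Q - fst w in let Dy := snd Q - snd w in
  let t := 2 * (1 - dot w Q) / (Dx*Dx + Dy*Dy) in
  (fst w + t * Dx, snd w + t * Dy).

Lemma dot_lt1 (w Q : point) : onS1 w -> inD Q -> dot w Q < 1.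
Proof.
  destruct w as [a b], Q as [c d]; rewrite onS1_m, inD_m; unfold dot; simpl; intros.
  pose proof (Rle_0_sqr (a - c)); pose proof (Rle_0_sqr (b - d)); unfold Rsqr in *; nra.
Qed.

Lemma pt_neq (w Q : point) : onS1 w -> inD Q ->
  (fst Q - fst w) * (fst Q - fst w) + (snd Q - snd w) * (snd Q - snd w) > 0.
Proof.
  destruct w as [a b], Q as [c d]; rewrite onS1_m, inD_m; simpl; intros.
  destruct (Req_dec c a); destruct (Req_dec d b); subst; try lra; try nra.
Qed.

Lemma sig_S1 (Q w : point) : onS1 w -> inD Q -> onS1 (sig Q w).
Proof.
  intros Hw HQ. pose proof (pt_neq w Q Hw HQ) as HN.
  destruct w as [a b], Q as [c d]; rewrite onS1_m in *; unfold sig, dot in *; simpl in *.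
  set (N := (c - a) * (c - a) + (d - b) * (d - b)) in *.
  set (t := 2 * (1 - (a * c + b * d)) / N).
  assert (Ht : t * N = 2 * (1 - (a * c + b * d))) by (unfold t; field; lra).
  clearbody t. unfold N in *. clear N HN HQ. nsatz.
Qed.

Lemma sig_cross (Q w X : point) : onS1 w -> inD Q ->
  cross w (sig Q w) X = 2 * (1 - dot w Q) /
     ((fst Q - fst w) * (fst Q - fst w) + (snd Q - snd w) * (snd Q - snd w)) * cross w Q X.
Proof.
  intros Hw HQ. destruct w as [a b], Q as [c d], X as [x y]; unfold sig, cross, dot; simpl. ring.
Qed.

Lemma sig_tpos (Q w : point) : onS1 w -> inD Q ->
  2 * (1 - dot w Q) / ((fst Q - fst w) * (fst Q - fst w) + (snd Q - snd w) * (snd Q - snd w)) > 0.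
Proof.
  intros Hw HQ. pose proof (pt_neq w Q Hw HQ). pose proof (dot_lt1 w Q Hw HQ).
  apply Rdiv_lt_0_compat; lra.
Qed.

Lemma sig_neq (Q w : point) : onS1 w -> inD Q -> sig Q w <> w.
Proof.
  intros Hw HQ E. pose proof (pt_neq w Q Hw HQ) as HN. pose proof (sig_tpos Q w Hw HQ) as Ht.
  destruct w as [a b], Q as [c d]; unfold sig in *; simpl in *.
  set (t := 2 * (1 - dot (a, b) (c, d)) / ((c - a) * (c - a) + (d - b) * (d - b))) in *.
  injection E; intros E2 E1.
  assert (t * (c - a) = 0) by lra. assert (t * (d - b) = 0) by lra.
  assert (c - a = 0) by (apply (Rmult_eq_reg_l t); lra).
  assert (d - b = 0) by (apply (Rmult_eq_reg_l t); lra). nra.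
Qed.

Lemma sig_col (Q w : point) : onS1 w -> inD Q -> cross w (sig Q w) Q = 0.
Proof.
  intros Hw HQ. rewrite sig_cross by auto. unfold cross. ring.
Qed.

Lemma line_circle (Q w u : point) : onS1 w -> onS1 u -> inD Q -> u <> w ->
  cross w u Q = 0 -> u = sig Q w.
Proof.
  intros Hw Hu HQ Hne Hc. pose proof (pt_neq w Q Hw HQ) as HN.
  destruct w as [a b], Q as [c d], u as [ux uy]; rewrite onS1_m in *; unfold sig, cross, dot in *; simpl in *.
  set (N := (c - a) * (c - a) + (d - b) * (d - b)) in *.
  set (lam := ((ux - a) * (c - a) + (uy - b) * (d - b)) / N).
  assert (E1 : ux - a = lam * (c - a)).
  { unfold lam. apply (Rmult_eq_reg_r N); [|lra].
    assert (H1 : (ux - a) * N - ((ux - a) * (c - a) + (uy - b) * (d - b)) * (c - a)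
       = (d - b) * ((ux - a) * (d - b) - (uy - b) * (c - a))) by (unfold N; ring).
    rewrite Hc, Rmult_0_r in H1. field_simplify; lra. }
  assert (E2 : uy - b = lam * (d - b)).
  { unfold lam. apply (Rmult_eq_reg_r N); [|lra].
    assert (H1 : (uy - b) * N - ((ux - a) * (c - a) + (uy - b) * (d - b)) * (d - b)
       = - (c - a) * ((ux - a) * (d - b) - (uy - b) * (c - a))) by (unfold N; ring).
    rewrite Hc, Rmult_0_r in H1. field_simplify; lra. }
  assert (Hl : lam <> 0).
  { intro H0. rewrite H0 in E1, E2. apply Hne. f_equal; lra. }
  assert (Hq : lam * (2 * (a * (c - a) + b * (d - b)) + lam * N) = 0).
  { unfold N. replace ux with (a + lam * (c - a)) in Hu by lra.
    replace uy with (b + lam * (d - b)) in Hu by lra. nra. }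
  assert (Hq2 : lam * N = 2 * (1 - (a * c + b * d))).
  { apply Rmult_integral in Hq. destruct Hq as [Hq|Hq]; [contradiction|]. nra. }
  assert (Hlam : lam = 2 * (1 - (a * c + b * d)) / N).
  { apply (Rmult_eq_reg_r N); [|lra]. field_simplify; lra. }
  rewrite <- Hlam. f_equal; lra.
Qed.
Lemma psi_char (U : point -> Prop) (v w0 : point) : psi_spec U v w0 ->
  (forall u, psi_spec U v u -> u = w0) -> psi U v = w0.
Proof.
  intros H Hu. unfold psi. apply Hu.
  apply (epsilon_spec (inhabits v) (fun w => psi_spec U v w)). exists w0; exact H.
Qed.

Lemma cross_seg (w u A B : point) (s : R) :
  cross w u ((1 - s) * fst A + s * fst B, (1 - s) * snd A + s * snd B) =
  (1 - s) * cross w u A + s * cross w u B.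
Proof. destruct w, u, A, B; unfold cross; simpl; ring. Qed.

Lemma segA (A B : point) : segment A B A.
Proof. exists 0. split; [lra|]. destruct A, B; simpl; f_equal; ring. Qed.
Lemma segB (A B : point) : segment A B B.
Proof. exists 1. split; [lra|]. destruct A, B; simpl; f_equal; ring. Qed.

Lemma cross_swap (w A B : point) : cross w B A = - cross w A B.
Proof. destruct w, A, B; unfold cross; simpl; ring. Qed.
Lemma cross_same (w A : point) : cross w A A = 0.
Proof. destruct w, A; unfold cross; simpl; ring. Qed.

Lemma seg_spec_A (A B w : point) : inD A -> inD B -> onS1 w -> cross w A B > 0 ->
  psi_spec (segment A B) w (sig A w).
Proof.
  intros HA HB Hw Hc. pose proof (sig_tpos A w Hw HA) as Ht.
  split; [apply sig_S1; auto|]. split; [apply sig_neq; auto|]. split.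
  - exists A. split; [apply segA|]. apply sig_col; auto.
  - intros X [s [Hs ->]]. rewrite sig_cross by auto. rewrite cross_seg, cross_same.
    apply Rmult_le_pos; [lra|]. nra.
Qed.

Lemma seg_spec_B (A B w : point) : inD A -> inD B -> onS1 w -> cross w A B < 0 ->
  psi_spec (segment A B) w (sig B w).
Proof.
  intros HA HB Hw Hc. pose proof (sig_tpos B w Hw HB) as Ht.
  split; [apply sig_S1; auto|]. split; [apply sig_neq; auto|]. split.
  - exists B. split; [apply segB|]. apply sig_col; auto.
  - intros X [s [Hs ->]]. rewrite sig_cross by auto. rewrite cross_seg, cross_same, cross_swap.
    apply Rmult_le_pos; [lra|]. nra.
Qed.

Lemma seg_spec_cases (A B w u : point) : psi_spec (segment A B) w u ->
  0 <= cross w u A /\ 0 <= cross w u B /\ (cross w u A = 0 \/ cross w u B = 0).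
Proof.
  intros [_ [_ [[X [[s [Hs ->]] Hx]] Hall]]].
  pose proof (Hall A (segA A B)) as H1. pose proof (Hall B (segB A B)) as H2.
  unfold collinear in Hx. rewrite cross_seg in Hx.
  split; [lra|]. split; [lra|].
  destruct (Req_dec s 0) as [->|Hs0].
  - left. lra.
  - right. nra.
Qed.

Lemma seg_uniq (A B w u : point) : inD A -> inD B -> onS1 w -> cross w A B <> 0 ->
  psi_spec (segment A B) w u -> (cross w A B > 0 -> u = sig A w) /\ (cross w A B < 0 -> u = sig B w).
Proof.
  intros HA HB Hw Hc Hs. pose proof (seg_spec_cases _ _ _ _ Hs) as [H1 [H2 H3]].
  destruct Hs as [Hu [Hne _]].
  pose proof (sig_tpos A w Hw HA) as HtA. pose proof (sig_tpos B w Hw HB) as HtB.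
  destruct H3 as [H3|H3].
  - assert (E : u = sig A w) by (apply line_circle; auto).
    split; [auto|]. intro Hlt. exfalso. rewrite E, sig_cross in H2 by auto. nra.
  - assert (E : u = sig B w) by (apply line_circle; auto).
    split; [|auto]. intro Hlt. exfalso. rewrite E, sig_cross, cross_swap in H1 by auto. nra.
Qed.

Lemma psi_A (P1 P2 w : point) : inD P1 -> inD P2 -> onS1 w -> cross w P1 P2 > 0 ->
  psi_seg P1 P2 w = sig P1 w.
Proof.
  intros. unfold psi_seg. apply psi_char. apply seg_spec_A; auto.
  intros u Hu. apply (seg_uniq P1 P2 w u); auto; lra.
Qed.

Lemma psi_B (P1 P2 w : point) : inD P1 -> inD P2 -> onS1 w -> cross w P1 P2 < 0 ->
  psi_seg P1 P2 w = sig P2 w.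
Proof.
  intros. unfold psi_seg. apply psi_char. apply seg_spec_B; auto.
  intros u Hu. apply (seg_uniq P1 P2 w u); auto; lra.
Qed.
Definition EE (v1 v2 : point) : R :=
  (fst v2 - fst v1) * (fst v2 - fst v1) + (snd v2 - snd v1) * (snd v2 - snd v1).
Definition Wdx (v1 v2 : point) (z : R) : R := - snd v1 - z * (fst v2 - fst v1).
Definition Wdy (v1 v2 : point) (z : R) : R := fst v1 - z * (snd v2 - snd v1).
Definition WN (v1 v2 : point) (z : R) : R := Wdx v1 v2 z * Wdx v1 v2 z + Wdy v1 v2 z * Wdy v1 v2 z.
Definition Wt (v1 v2 : point) (z : R) : R :=
  -2 * (fst v1 * Wdx v1 v2 z + snd v1 * Wdy v1 v2 z) / WN v1 v2 z.
Definition Wp (v1 v2 : point) (z : R) : point :=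
  (fst v1 + Wt v1 v2 z * Wdx v1 v2 z, snd v1 + Wt v1 v2 z * Wdy v1 v2 z).
Definition zc (v1 v2 w : point) : R := (1 - dot w v1) / cross v1 v2 w.

Lemma EE_pos (v1 v2 : point) : v1 <> v2 -> EE v1 v2 > 0.
Proof.
  intro H. destruct v1 as [a b], v2 as [c d]; unfold EE; simpl.
  destruct (Req_dec a c); destruct (Req_dec b d); subst; try (exfalso; auto; fail); nra.
Qed.

Lemma v1e (v1 v2 : point) : onS1 v1 -> onS1 v2 ->
  fst v1 * (fst v2 - fst v1) + snd v1 * (snd v2 - snd v1) = - EE v1 v2 / 2.
Proof.
  destruct v1 as [a b], v2 as [c d]; rewrite !onS1_m; unfold EE; simpl; intros; nra.
Qed.

Lemma EE_dot (v1 v2 : point) : onS1 v1 -> onS1 v2 -> EE v1 v2 = 2 * (1 - dot v1 v2).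
Proof.
  destruct v1 as [a b], v2 as [c d]; rewrite !onS1_m; unfold EE, dot; simpl; intros. nsatz.
Qed.

Lemma WN_pos (v1 v2 : point) (z : R) : onS1 v1 -> onS1 v2 -> v1 <> v2 -> WN v1 v2 z > 0.
Proof.
  intros H1 H2 Hne. pose proof (EE_pos _ _ Hne) as HE. pose proof (v1e _ _ H1 H2) as He.
  destruct v1 as [a b], v2 as [c d]; unfold WN, Wdx, Wdy, EE in *; simpl in *.
  destruct (Rle_or_lt (( - b - z * (c - a)) * ( - b - z * (c - a)) + (a - z * (d - b)) * (a - z * (d - b))) 0) as [Hl|Hl]; [|lra].
  exfalso.
  set (u := - b - z * (c - a)) in *. set (v := a - z * (d - b)) in *.
  pose proof (Rle_0_sqr u). pose proof (Rle_0_sqr v). unfold Rsqr in *.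
  assert (X1 : u = 0) by (apply Rsqr_0_uniq; unfold Rsqr; lra).
  assert (X2 : v = 0) by (apply Rsqr_0_uniq; unfold Rsqr; lra).
  unfold u, v in *.
  assert (X3 : a * (c - a) + b * (d - b) = 0).
  { replace a with (z * (d - b)) at 1 by lra. replace b with (- z * (c - a)) at 2 by lra. ring. }
  lra.
Qed.

Lemma W_facts (v1 v2 : point) (z : R) : onS1 v1 -> onS1 v2 -> v1 <> v2 ->
  onS1 (Wp v1 v2 z) /\
  cross v1 v2 (Wp v1 v2 z) * (2 * WN v1 v2 z) = z * EE v1 v2 * EE v1 v2 /\
  (1 - dot (Wp v1 v2 z) v1) * (2 * WN v1 v2 z) = z * z * EE v1 v2 * EE v1 v2.
Proof.
  intros H1 H2 Hne. pose proof (WN_pos _ _ z H1 H2 Hne) as HN.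
  assert (Ht : Wt v1 v2 z * WN v1 v2 z = -2 * (fst v1 * Wdx v1 v2 z + snd v1 * Wdy v1 v2 z)).
  { unfold Wt. field. lra. }
  unfold Wp, cross, dot, EE. rewrite onS1_m. rewrite onS1_m in H1, H2.
  generalize dependent (Wt v1 v2 z). intros t Ht. clear HN.
  destruct v1 as [a b], v2 as [c d]; unfold WN, Wdx, Wdy in *; simpl in *.
  split; [|split]; nsatz.
Qed.

Lemma W_S1 (v1 v2 : point) (z : R) : onS1 v1 -> onS1 v2 -> v1 <> v2 -> onS1 (Wp v1 v2 z).
Proof. intros; apply W_facts; auto. Qed.

Lemma W_gam (v1 v2 : point) (z : R) : onS1 v1 -> onS1 v2 -> v1 <> v2 ->
  cross v1 v2 (Wp v1 v2 z) = z * EE v1 v2 * EE v1 v2 / (2 * WN v1 v2 z).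
Proof.
  intros H1 H2 Hne. pose proof (WN_pos _ _ z H1 H2 Hne) as HN.
  destruct (W_facts v1 v2 z H1 H2 Hne) as [_ [E _]].
  apply (Rmult_eq_reg_r (2 * WN v1 v2 z)); [|lra]. rewrite E. field. lra.
Qed.

Lemma zc_W (v1 v2 : point) (z : R) : onS1 v1 -> onS1 v2 -> v1 <> v2 -> z <> 0 ->
  zc v1 v2 (Wp v1 v2 z) = z.
Proof.
  intros H1 H2 Hne Hz. pose proof (WN_pos _ _ z H1 H2 Hne) as HN.
  pose proof (EE_pos _ _ Hne) as HE.
  destruct (W_facts v1 v2 z H1 H2 Hne) as [_ [E1 E2]].
  unfold zc.
  assert (G : cross v1 v2 (Wp v1 v2 z) <> 0).
  { intro G. rewrite G in E1. assert (z * EE v1 v2 * EE v1 v2 <> 0).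
    { repeat apply Rmult_integral_contrapositive_currified; lra. } lra. }
  apply (Rmult_eq_reg_r (cross v1 v2 (Wp v1 v2 z) * (2 * WN v1 v2 z))).
  2:{ apply Rmult_integral_contrapositive_currified; lra. }
  replace ((1 - dot (Wp v1 v2 z) v1) / cross v1 v2 (Wp v1 v2 z) *
    (cross v1 v2 (Wp v1 v2 z) * (2 * WN v1 v2 z))) with ((1 - dot (Wp v1 v2 z) v1) * (2 * WN v1 v2 z))
    by (field; auto).
  rewrite E2, E1. ring.
Qed.

Lemma W_zc (v1 v2 w : point) : onS1 v1 -> onS1 v2 -> v1 <> v2 -> onS1 w ->
  cross v1 v2 w <> 0 -> Wp v1 v2 (zc v1 v2 w) = w.
Proof.
  intros H1 H2 Hne Hw Hg.
  set (z := zc v1 v2 w).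
  assert (Hz : z * cross v1 v2 w = 1 - dot w v1) by (unfold z, zc; field; auto).
  pose proof (WN_pos _ _ z H1 H2 Hne) as HN.
  unfold Wp, Wt. clearbody z. rewrite onS1_m in H1, H2, Hw.
  destruct v1 as [a b], v2 as [c d], w as [wx wy]; unfold WN, Wdx, Wdy, cross, dot in *; simpl in *.
  set (N := (- b - z * (c - a)) * (- b - z * (c - a)) + (a - z * (d - b)) * (a - z * (d - b))) in *.
  set (g := (c - a) * (wy - b) - (d - b) * (wx - a)) in *.
  assert (K1 : g*g*(a*N - 2*(a*(- b - z * (c - a))+b*(a - z * (d - b)))*(- b - z * (c - a))) = g*g*(wx * N)).
  { unfold N, g in *. clear N g HN. nsatz. }
  assert (K2 : g*g*(b*N - 2*(a*(- b - z * (c - a))+b*(a - z * (d - b)))*(a - z * (d - b))) = g*g*(wy * N)).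
  { unfold N, g in *. clear N g HN. nsatz. }
  assert (gg : g * g <> 0) by (apply Rmult_integral_contrapositive_currified; auto).
  f_equal.
  - apply (Rmult_eq_reg_r N); [|lra]. apply (Rmult_eq_reg_l (g*g)); [|auto].
    rewrite <- K1. field. lra.
  - apply (Rmult_eq_reg_r N); [|lra]. apply (Rmult_eq_reg_l (g*g)); [|auto].
    rewrite <- K2. field. lra.
Qed.

Lemma chordW (v1 v2 P : point) (z1 z2 : R) : onS1 v1 -> onS1 v2 -> v1 <> v2 ->
  cross (Wp v1 v2 z1) (Wp v1 v2 z2) P * (WN v1 v2 z1 * WN v1 v2 z2) =
  EE v1 v2 * (z1 - z2) * (EE v1 v2 * (1 - dot v2 P) * z1 * z2 - cross v1 v2 P * (z1 + z2) + (1 - dot v1 P)).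
Proof.
  intros H1 H2 Hne. pose proof (WN_pos _ _ z1 H1 H2 Hne) as HN1. pose proof (WN_pos _ _ z2 H1 H2 Hne) as HN2.
  assert (Ht1 : Wt v1 v2 z1 * WN v1 v2 z1 = -2 * (fst v1 * Wdx v1 v2 z1 + snd v1 * Wdy v1 v2 z1)).
  { unfold Wt. field. lra. }
  assert (Ht2 : Wt v1 v2 z2 * WN v1 v2 z2 = -2 * (fst v1 * Wdx v1 v2 z2 + snd v1 * Wdy v1 v2 z2)).
  { unfold Wt. field. lra. }
  unfold Wp, cross, dot, EE. rewrite onS1_m in H1, H2.
  generalize dependent (Wt v1 v2 z1). intros t1 Ht1.
  generalize dependent (Wt v1 v2 z2). intros t2 Ht2. clear HN1 HN2.
  destruct v1 as [a b], v2 as [c d], P as [px py]; unfold WN, Wdx, Wdy in *; simpl in *.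
  nsatz.
Qed.

Lemma S1_on_L (v1 v2 w : point) : onS1 v1 -> onS1 v2 -> v1 <> v2 -> onS1 w ->
  cross v1 v2 w = 0 -> w = v1 \/ w = v2.
Proof.
  intros H1 H2 Hne Hw Hc. pose proof (EE_pos _ _ Hne) as HE. pose proof (v1e _ _ H1 H2) as He.
  rewrite onS1_m in H1, H2, Hw.
  destruct v1 as [a b], v2 as [c d], w as [x y]; unfold cross, EE in *; simpl in *.
  set (E := (c - a) * (c - a) + (d - b) * (d - b)) in *.
  set (s := ((x - a) * (c - a) + (y - b) * (d - b)) / E).
  assert (E1 : x - a = s * (c - a)).
  { unfold s. apply (Rmult_eq_reg_r E); [|lra].
    assert (K : (x - a) * E - ((x - a) * (c - a) + (y - b) * (d - b)) * (c - a)
       = - (d - b) * ((c - a) * (y - b) - (d - b) * (x - a))) by (unfold E; ring).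
    rewrite Hc, Rmult_0_r in K. field_simplify; lra. }
  assert (E2 : y - b = s * (d - b)).
  { unfold s. apply (Rmult_eq_reg_r E); [|lra].
    assert (K : (y - b) * E - ((x - a) * (c - a) + (y - b) * (d - b)) * (d - b)
       = (c - a) * ((c - a) * (y - b) - (d - b) * (x - a))) by (unfold E; ring).
    rewrite Hc, Rmult_0_r in K. field_simplify; lra. }
  assert (Q : s * (s - 1) * E = 0).
  { replace x with (a + s * (c - a)) in Hw by lra. replace y with (b + s * (d - b)) in Hw by lra.
    unfold E. nra. }
  assert (s = 0 \/ s = 1).
  { apply Rmult_integral in Q. destruct Q as [Q|Q]; [|lra].
    apply Rmult_integral in Q. destruct Q; [left|right]; lra. }
  destruct H as [->| ->]; [left|right]; f_equal; lra.
Qed.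

Lemma omd_pos (v w : point) : onS1 v -> onS1 w -> w <> v -> 1 - dot w v > 0.
Proof.
  intros Hv Hw Hne. rewrite onS1_m in Hv, Hw. destruct v as [a b], w as [c d]; unfold dot; simpl in *.
  destruct (Req_dec a c); destruct (Req_dec b d); subst; try (exfalso; auto; fail); nra.
Qed.
Definition Lp (v1 v2 : point) (a : R) : point :=
  (fst v1 + a * (fst v2 - fst v1), snd v1 + a * (snd v2 - snd v1)).

Lemma Lp_inD (v1 v2 : point) (a : R) : onS1 v1 -> onS1 v2 -> v1 <> v2 -> 0 < a < 1 ->
  inD (Lp v1 v2 a).
Proof.
  intros H1 H2 Hne Ha. pose proof (EE_pos _ _ Hne) as HE. pose proof (v1e _ _ H1 H2) as He.
  rewrite inD_m. rewrite onS1_m in H1, H2.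
  destruct v1 as [x1 y1], v2 as [x2 y2]; unfold Lp, EE in *; simpl in *.
  assert (K : (x1 + a * (x2 - x1)) * (x1 + a * (x2 - x1)) + (y1 + a * (y2 - y1)) * (y1 + a * (y2 - y1))
     = 1 - a * (1 - a) * ((x2 - x1) * (x2 - x1) + (y2 - y1) * (y2 - y1))) by nra.
  rewrite K. assert (0 < a * (1 - a)) by nra. nra.
Qed.

Lemma cross_Lp (v1 v2 w : point) (a1 a2 : R) :
  cross w (Lp v1 v2 a1) (Lp v1 v2 a2) = (a2 - a1) * cross v1 v2 w.
Proof. destruct v1, v2, w; unfold cross, Lp; simpl; ring. Qed.

Lemma gam_v1 (v1 v2 : point) : cross v1 v2 v1 = 0.
Proof. destruct v1, v2; unfold cross; simpl; ring. Qed.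
Lemma gam_v2 (v1 v2 : point) : cross v1 v2 v2 = 0.
Proof. destruct v1, v2; unfold cross; simpl; ring. Qed.

Lemma zc_sign (v1 v2 w : point) : onS1 v1 -> onS1 w -> cross v1 v2 w <> 0 ->
  (cross v1 v2 w > 0 -> zc v1 v2 w > 0) /\ (cross v1 v2 w < 0 -> zc v1 v2 w < 0).
Proof.
  intros H1 Hw Hg.
  assert (Hne : w <> v1) by (intro E; subst; apply Hg; apply gam_v1).
  pose proof (omd_pos v1 w H1 Hw Hne) as Hp. unfold zc. split; intro.
  - apply Rdiv_lt_0_compat; lra.
  - apply Ropp_lt_cancel. rewrite Ropp_0. replace (- ((1 - dot w v1) / cross v1 v2 w))
      with ((1 - dot w v1) / (- cross v1 v2 w)) by (field; auto).
    apply Rdiv_lt_0_compat; lra.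
Qed.

Lemma z_sig (v1 v2 w : point) (a : R) : onS1 v1 -> onS1 v2 -> v1 <> v2 -> 0 < a < 1 ->
  onS1 w -> cross v1 v2 w <> 0 ->
  onS1 (sig (Lp v1 v2 a) w) /\ cross v1 v2 (sig (Lp v1 v2 a) w) <> 0 /\
  zc v1 v2 (sig (Lp v1 v2 a) w) * zc v1 v2 w = - a / ((1 - a) * EE v1 v2).
Proof.
  intros H1 H2 Hne Ha Hw Hg.
  pose proof (Lp_inD v1 v2 a H1 H2 Hne Ha) as HQ. set (Q := Lp v1 v2 a) in *.
  pose proof (EE_pos _ _ Hne) as HE.
  set (u := sig Q w).
  assert (Hu : onS1 u) by (apply sig_S1; auto).
  assert (Hc : cross w u Q = 0) by (apply sig_col; auto).
  assert (Hun : u <> w) by (apply sig_neq; auto).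
  assert (Hgu : cross v1 v2 u <> 0).
  { intro G. destruct (S1_on_L v1 v2 u H1 H2 Hne Hu G) as [E|E]; rewrite E in Hc; unfold Q in Hc.
    - apply Hg. replace (cross w v1 (Lp v1 v2 a)) with (a * cross v1 v2 w) in Hc
        by (destruct v1, v2, w; unfold cross, Lp; simpl; ring).
      apply Rmult_integral in Hc. destruct Hc; lra.
    - apply Hg. replace (cross w v2 (Lp v1 v2 a)) with ((a - 1) * cross v1 v2 w) in Hc
        by (destruct v1, v2, w; unfold cross, Lp; simpl; ring).
      apply Rmult_integral in Hc. destruct Hc; lra. }
  split; [auto|]. split; [auto|].
  set (z1 := zc v1 v2 w). set (z2 := zc v1 v2 u).
  assert (Ew : Wp v1 v2 z1 = w) by (apply W_zc; auto).
  assert (Eu : Wp v1 v2 z2 = u) by (apply W_zc; auto).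
  assert (Hz : z1 <> z2) by (intro E; apply Hun; rewrite <- Eu, <- Ew, E; auto).
  pose proof (chordW v1 v2 Q z1 z2 H1 H2 Hne) as K.
  rewrite Ew, Eu, Hc, Rmult_0_l in K.
  assert (K2 : EE v1 v2 * (1 - dot v2 Q) * z1 * z2 - cross v1 v2 Q * (z1 + z2) + (1 - dot v1 Q) = 0).
  { symmetry in K. apply Rmult_integral in K. destruct K as [K|K]; auto.
    apply Rmult_integral in K. destruct K; lra. }
  assert (G0 : cross v1 v2 Q = 0) by (unfold Q; destruct v1, v2; unfold cross, Lp; simpl; ring).
  assert (D1 : 1 - dot v1 Q = a * EE v1 v2 / 2).
  { pose proof (v1e _ _ H1 H2) as He. rewrite onS1_m in H1.
    unfold Q; destruct v1 as [x1 y1], v2 as [x2 y2]; unfold dot, Lp in *; simpl in *.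
    transitivity (1 - (x1*x1+y1*y1) - a*(x1*(x2-x1)+y1*(y2-y1))); [ring|].
    rewrite H1, He. field. }
  assert (D2 : 1 - dot v2 Q = (1 - a) * EE v1 v2 / 2).
  { pose proof (EE_dot _ _ H1 H2) as He. rewrite onS1_m in H2.
    unfold Q; destruct v1 as [x1 y1], v2 as [x2 y2]; unfold dot, Lp in *; simpl in *.
    transitivity ((1 - a) * (1 - (x1*x2+y1*y2)) + a * (1 - (x2*x2+y2*y2))); [ring|].
    rewrite H2, He. field. }
  rewrite G0, D1, D2 in K2.
  assert (K3 : z1 * z2 * ((1 - a) * EE v1 v2) = - a).
  { apply (Rmult_eq_reg_l (EE v1 v2 / 2)); [|lra].
    transitivity (EE v1 v2 * ((1 - a) * EE v1 v2 / 2) * z1 * z2 - 0 * (z1 + z2) + a * EE v1 v2 / 2 - a * EE v1 v2 / 2); [field|].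
    rewrite K2. field. }
  rewrite Rmult_comm. fold z1 z2.
  assert ((1 - a) * EE v1 v2 > 0) by (apply Rmult_gt_0_compat; lra).
  rewrite <- K3. field. lra.
Qed.
Lemma gam_of_zc (v1 v2 u : point) : onS1 v1 -> onS1 u -> cross v1 v2 u <> 0 ->
  (zc v1 v2 u > 0 -> cross v1 v2 u > 0) /\ (zc v1 v2 u < 0 -> cross v1 v2 u < 0).
Proof.
  intros H1 Hu Hg. destruct (zc_sign v1 v2 u H1 Hu Hg) as [A B].
  split; intro; destruct (Rtotal_order (cross v1 v2 u) 0) as [X|[X|X]];
  try (specialize (B X); lra); try (specialize (A X); lra); try contradiction; lra.
Qed.

Section Dyn.
Variables (v1 v2 : point) (a1 a2 : R).
Hypotheses (H1 : onS1 v1) (H2 : onS1 v2) (Hne : v1 <> v2) (Ha1 : 0 < a1) (Ha12 : a1 < a2) (Ha2 : a2 < 1).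

Definition R0 := a2 * (1 - a1) / (a1 * (1 - a2)).

Lemma R0_gt1 : R0 > 1.
Proof.
  unfold R0. apply (Rmult_lt_reg_r (a1 * (1 - a2))). nra.
  field_simplify; nra.
Qed.

Lemma stepA (w : point) : onS1 w -> cross v1 v2 w > 0 ->
  let u := psi_seg (Lp v1 v2 a1) (Lp v1 v2 a2) (psi_seg (Lp v1 v2 a1) (Lp v1 v2 a2) w) in
  onS1 u /\ cross v1 v2 u > 0 /\ zc v1 v2 u = R0 * zc v1 v2 w.
Proof.
  intros Hw Hg u.
  assert (HP1 : inD (Lp v1 v2 a1)) by (apply Lp_inD; auto; lra).
  assert (HP2 : inD (Lp v1 v2 a2)) by (apply Lp_inD; auto; lra).
  pose proof (EE_pos _ _ Hne) as HE.
  assert (E1 : psi_seg (Lp v1 v2 a1) (Lp v1 v2 a2) w = sig (Lp v1 v2 a1) w).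
  { apply psi_A; auto. rewrite cross_Lp. nra. }
  destruct (z_sig v1 v2 w a1 H1 H2 Hne ltac:(lra) Hw ltac:(lra)) as [Hw1 [Hg1 Z1]].
  set (w1 := sig (Lp v1 v2 a1) w) in *.
  pose proof (zc_sign v1 v2 w H1 Hw ltac:(lra)) as [Zw _]. specialize (Zw Hg).
  assert (Zw1 : zc v1 v2 w1 < 0).
  { assert (zc v1 v2 w1 * zc v1 v2 w < 0).
    { rewrite Z1. assert (a1 / ((1 - a1) * EE v1 v2) > 0).
      { apply Rdiv_lt_0_compat; [lra|]. apply Rmult_gt_0_compat; lra. }
      unfold Rdiv in *. lra. }
    nra. }
  assert (G1 : cross v1 v2 w1 < 0) by (apply (gam_of_zc v1 v2 w1 H1 Hw1 Hg1); auto).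
  assert (E2 : psi_seg (Lp v1 v2 a1) (Lp v1 v2 a2) w1 = sig (Lp v1 v2 a2) w1).
  { apply psi_B; auto. rewrite cross_Lp. nra. }
  unfold u. rewrite E1. fold w1. rewrite E2.
  destruct (z_sig v1 v2 w1 a2 H1 H2 Hne ltac:(lra) Hw1 ltac:(lra)) as [Hu [Hgu Z2]].
  assert (Zu : zc v1 v2 (sig (Lp v1 v2 a2) w1) = R0 * zc v1 v2 w).
  { apply (Rmult_eq_reg_r (zc v1 v2 w1)); [|lra]. rewrite Z2.
    apply (Rmult_eq_reg_r (zc v1 v2 w)); [|lra].
    rewrite (Rmult_assoc (R0 * zc v1 v2 w)). rewrite Z1. unfold R0.
    field. repeat split; lra. }
  split; [auto|]. split; [|auto].
  apply (gam_of_zc v1 v2 _ H1 Hu Hgu). rewrite Zu. pose proof R0_gt1. nra.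
Qed.

Lemma stepB (w : point) : onS1 w -> cross v1 v2 w < 0 ->
  let u := psi_seg (Lp v1 v2 a1) (Lp v1 v2 a2) (psi_seg (Lp v1 v2 a1) (Lp v1 v2 a2) w) in
  onS1 u /\ cross v1 v2 u < 0 /\ zc v1 v2 u * R0 = zc v1 v2 w.
Proof.
  intros Hw Hg u.
  assert (HP1 : inD (Lp v1 v2 a1)) by (apply Lp_inD; auto; lra).
  assert (HP2 : inD (Lp v1 v2 a2)) by (apply Lp_inD; auto; lra).
  pose proof (EE_pos _ _ Hne) as HE.
  assert (E1 : psi_seg (Lp v1 v2 a1) (Lp v1 v2 a2) w = sig (Lp v1 v2 a2) w).
  { apply psi_B; auto. rewrite cross_Lp. nra. }
  destruct (z_sig v1 v2 w a2 H1 H2 Hne ltac:(lra) Hw ltac:(lra)) as [Hw1 [Hg1 Z1]].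
  set (w1 := sig (Lp v1 v2 a2) w) in *.
  pose proof (zc_sign v1 v2 w H1 Hw ltac:(lra)) as [_ Zw]. specialize (Zw Hg).
  assert (Zw1 : zc v1 v2 w1 > 0).
  { assert (zc v1 v2 w1 * zc v1 v2 w < 0).
    { rewrite Z1. assert (a2 / ((1 - a2) * EE v1 v2) > 0).
      { apply Rdiv_lt_0_compat; [lra|]. apply Rmult_gt_0_compat; lra. }
      unfold Rdiv in *. lra. }
    nra. }
  assert (G1 : cross v1 v2 w1 > 0) by (apply (gam_of_zc v1 v2 w1 H1 Hw1 Hg1); auto).
  assert (E2 : psi_seg (Lp v1 v2 a1) (Lp v1 v2 a2) w1 = sig (Lp v1 v2 a1) w1).
  { apply psi_A; auto. rewrite cross_Lp. nra. }
  unfold u. rewrite E1. fold w1. rewrite E2.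
  destruct (z_sig v1 v2 w1 a1 H1 H2 Hne ltac:(lra) Hw1 ltac:(lra)) as [Hu [Hgu Z2]].
  assert (Zu : zc v1 v2 (sig (Lp v1 v2 a1) w1) * R0 = zc v1 v2 w).
  { apply (Rmult_eq_reg_r (zc v1 v2 w1)); [|lra].
    transitivity (zc v1 v2 (sig (Lp v1 v2 a1) w1) * zc v1 v2 w1 * R0); [ring|].
    rewrite Z2. rewrite (Rmult_comm (zc v1 v2 w)), Z1. unfold R0.
    field. repeat split; lra. }
  split; [auto|]. split; [|auto].
  apply (gam_of_zc v1 v2 _ H1 Hu Hgu). pose proof R0_gt1.
  assert (zc v1 v2 (sig (Lp v1 v2 a1) w1) * R0 < 0) by lra. nra.
Qed.

Lemma iterA (k : nat) (w : point) : onS1 w -> cross v1 v2 w > 0 ->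
  let u := iter_pt (psi_seg (Lp v1 v2 a1) (Lp v1 v2 a2)) (2 * k) w in
  onS1 u /\ cross v1 v2 u > 0 /\ zc v1 v2 u = R0 ^ k * zc v1 v2 w.
Proof.
  intros Hw Hg. induction k as [|k IH]; intro u.
  - unfold u, iter_pt. simpl. split; auto. split; auto. ring.
  - unfold u, iter_pt. replace (2 * S k)%nat with (S (S (2 * k))) by lia. change (Nat.iter (S (S ?n)) ?f ?x) with (f (f (Nat.iter n f x))).
    destruct IH as [A [B C]]. unfold iter_pt in A, B, C.
    destruct (stepA _ A B) as [A' [B' C']].
    split; auto. split; auto. rewrite C', C. simpl. ring.
Qed.

Lemma iterB (k : nat) (w : point) : onS1 w -> cross v1 v2 w < 0 ->
  let u := iter_pt (psi_seg (Lp v1 v2 a1) (Lp v1 v2 a2)) (2 * k) w in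
  onS1 u /\ cross v1 v2 u < 0 /\ zc v1 v2 u * R0 ^ k = zc v1 v2 w.
Proof.
  intros Hw Hg. induction k as [|k IH]; intro u.
  - unfold u, iter_pt. simpl. split; auto. split; auto. ring.
  - unfold u, iter_pt. replace (2 * S k)%nat with (S (S (2 * k))) by lia. change (Nat.iter (S (S ?n)) ?f ?x) with (f (f (Nat.iter n f x))).
    destruct IH as [A [B C]]. unfold iter_pt in A, B, C.
    destruct (stepB _ A B) as [A' [B' C']].
    split; auto. split; auto. rewrite <- C, <- C'. simpl. ring.
Qed.

End Dyn.
From Stdlib Require Import List.
Import ListNotations.

Lemma quad_roots (A B C u : R) : A > 0 ->
  (A * u * u + B * u + C = 0 <-> (2 * A * u + B) * (2 * A * u + B) = B * B - 4 * A * C).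
Proof.
  intro HA. split; intro H.
  - transitivity (4 * A * (A * u * u + B * u + C) + B * B - 4 * A * C); [ring|]. rewrite H. ring.
  - apply (Rmult_eq_reg_l (4 * A)); [|lra].
    transitivity ((2 * A * u + B) * (2 * A * u + B) - (B * B - 4 * A * C)); [ring|]. rewrite H. ring.
Qed.

Lemma sq_eq_sqrt (x d : R) : 0 <= d -> x * x = d -> x = sqrt d \/ x = - sqrt d.
Proof.
  intros Hd H. pose proof (sqrt_sqrt d Hd) as S. pose proof (sqrt_pos d).
  assert ((x - sqrt d) * (x + sqrt d) = 0) by nra.
  apply Rmult_integral in H1. destruct H1; [left|right]; lra.
Qed.

Lemma card_quad (S : point -> Prop) (F : R -> point) (A B C : R) : A > 0 ->
  (forall u1 u2, A * u1 * u1 + B * u1 + C = 0 -> A * u2 * u2 + B * u2 + C = 0 -> F u1 = F u2 -> u1 = u2) ->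
  (forall w, S w <-> exists u, A * u * u + B * u + C = 0 /\ w = F u) ->
  (B * B - 4 * A * C < 0 -> has_card S 0) /\
  (B * B - 4 * A * C = 0 -> has_card S 1) /\
  (B * B - 4 * A * C > 0 -> has_card S 2).
Proof.
  intros HA Hinj HS. split; [|split]; intro Hd.
  - exists []. split; [constructor|]. split; [reflexivity|].
    intro w. rewrite HS. split; [|intros []].
    intros [u [Hu _]]. apply (quad_roots A B C u HA) in Hu. pose proof (Rle_0_sqr (2 * A * u + B)). unfold Rsqr in *. lra.
  - set (r := - B / (2 * A)).
    assert (Hr : A * r * r + B * r + C = 0).
    { apply quad_roots; auto. rewrite Hd. unfold r. field. lra. }
    exists [F r]. split; [constructor; [intros []|constructor]|]. split; [reflexivity|].
    intro w. rewrite HS. simpl. split.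
    + intros [u [Hu ->]]. left. apply (quad_roots A B C u HA) in Hu. rewrite Hd in Hu.
      assert (X : 2 * A * u + B = 0) by (apply Rsqr_0_uniq; unfold Rsqr; lra).
      f_equal. unfold r. apply (Rmult_eq_reg_l (2 * A)); [|lra].
      replace (2 * A * (- B / (2 * A))) with (- B) by (field; lra). lra.
    + intros [E|[]]. exists r. split; auto.
  - set (s := sqrt (B * B - 4 * A * C)).
    assert (Hs : s > 0) by (apply sqrt_lt_R0; lra).
    assert (Hss : s * s = B * B - 4 * A * C) by (apply sqrt_sqrt; lra).
    set (r1 := (- B + s) / (2 * A)). set (r2 := (- B - s) / (2 * A)).
    assert (Hr1 : A * r1 * r1 + B * r1 + C = 0).
    { apply quad_roots; auto. rewrite <- Hss. unfold r1. field. lra. }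
    assert (Hr2 : A * r2 * r2 + B * r2 + C = 0).
    { apply quad_roots; auto. rewrite <- Hss. unfold r2. field. lra. }
    assert (Hne : r1 <> r2).
    { intro E. assert (E' : - B + s = - B - s).
      { replace (- B + s) with (2 * A * r1) by (unfold r1; field; lra).
        replace (- B - s) with (2 * A * r2) by (unfold r2; field; lra). rewrite E; reflexivity. }
      lra. }
    exists [F r1; F r2]. split.
    + constructor; [|constructor; [intros []|constructor]].
      intros [E|[]]. apply Hne. apply Hinj; auto.
    + split; [reflexivity|]. intro w. rewrite HS. simpl. split.
      * intros [u [Hu ->]]. apply (quad_roots A B C u HA) in Hu.
        destruct (sq_eq_sqrt _ _ (Rlt_le _ _ Hd) Hu) as [E|E]; fold s in E.
        -- left. f_equal. unfold r1. rewrite <- E. field. lra.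
        -- right; left. f_equal. unfold r2. replace (- B - s) with (2 * A * u) by lra. field. lra.
      * intros [E|[E|[]]]; [exists r1|exists r2]; split; auto.
Qed.
Section Tau.
Variables (v1 v2 : point) (a1 a2 : R) (P : point) (n : nat).
Hypotheses (H1 : onS1 v1) (H2 : onS1 v2) (Hne : v1 <> v2) (Ha1 : 0 < a1) (Ha12 : a1 < a2) (Ha2 : a2 < 1)
  (HP : inD P) (Hn : (0 < n)%nat).

Definition mu := R0 a1 a2 ^ n.
Definition Qa := EE v1 v2 * (1 - dot v2 P) * mu.
Definition Qb := - cross v1 v2 P * (1 + mu).
Definition Qc := 1 - dot v1 P.

Lemma mu_gt1 : mu > 1.
Proof.
  unfold mu. pose proof (R0_gt1 a1 a2 Ha1 Ha12 Ha2). destruct n as [|k]; [lia|].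
  clear Hn. induction k; simpl in *; nra.
Qed.

Lemma Qc_pos : Qc > 0.
Proof. unfold Qc. pose proof (dot_lt1 v1 P H1 HP). lra. Qed.
Lemma omd2_pos : 1 - dot v2 P > 0.
Proof. pose proof (dot_lt1 v2 P H2 HP). lra. Qed.
Lemma Qa_pos : Qa > 0.
Proof.
  unfold Qa. pose proof mu_gt1. pose proof omd2_pos. pose proof (EE_pos _ _ Hne).
  repeat apply Rmult_gt_0_compat; lra.
Qed.

Lemma root_sign (u : R) : Qa * u * u + Qb * u + Qc = 0 ->
  (cross v1 v2 P > 0 -> u > 0) /\ (cross v1 v2 P < 0 -> u < 0).
Proof.
  intro H. pose proof Qa_pos. pose proof Qc_pos. pose proof mu_gt1.
  assert (Qa * u * u >= 0) by (rewrite Rmult_assoc; pose proof (Rle_0_sqr u); unfold Rsqr in *; nra).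
  unfold Qb in H. split; intro G.
  - destruct (Rle_or_lt u 0); [|auto]. exfalso.
    assert (K : cross v1 v2 P * (1 + mu) > 0) by (apply Rmult_gt_0_compat; lra).
    assert (- cross v1 v2 P * (1 + mu) * u = (cross v1 v2 P * (1 + mu)) * (- u)) by ring.
    assert ((cross v1 v2 P * (1 + mu)) * (- u) >= 0) by (apply Rle_ge, Rmult_le_pos; lra).
    lra.
  - destruct (Rle_or_lt 0 u); [|auto]. exfalso.
    assert (K : - cross v1 v2 P * (1 + mu) > 0) by (apply Rmult_gt_0_compat; lra).
    assert (- cross v1 v2 P * (1 + mu) * u >= 0) by (apply Rle_ge, Rmult_le_pos; lra).
    lra.
Qed.

Lemma chord0 (z1 z2 : R) :
  cross (Wp v1 v2 z1) (Wp v1 v2 z2) P = 0 <->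
  z1 = z2 \/ EE v1 v2 * (1 - dot v2 P) * z1 * z2 - cross v1 v2 P * (z1 + z2) + (1 - dot v1 P) = 0.
Proof.
  pose proof (chordW v1 v2 P z1 z2 H1 H2 Hne) as K.
  pose proof (WN_pos v1 v2 z1 H1 H2 Hne) as N1. pose proof (WN_pos v1 v2 z2 H1 H2 Hne) as N2.
  pose proof (EE_pos _ _ Hne) as HE.
  split; intro H.
  - rewrite H, Rmult_0_l in K. symmetry in K. apply Rmult_integral in K. destruct K as [K|K]; [|right; auto].
    apply Rmult_integral in K. destruct K as [K|K]; [lra|left; lra].
  - assert (X : cross (Wp v1 v2 z1) (Wp v1 v2 z2) P * (WN v1 v2 z1 * WN v1 v2 z2) = 0).
    { rewrite K. destruct H as [H|H]; [rewrite H; ring|rewrite H; ring]. }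
    apply Rmult_integral in X. destruct X as [X|X]; auto. nra.
Qed.

Let P1 := Lp v1 v2 a1.
Let P2 := Lp v1 v2 a2.

Lemma gam_ne0 (w : point) : onS1 w -> w <> v1 -> w <> v2 -> cross v1 v2 w <> 0.
Proof. intros Hw A B G. destruct (S1_on_L v1 v2 w H1 H2 Hne Hw G); contradiction. Qed.

Lemma W_ne (z : R) : z <> 0 -> Wp v1 v2 z <> v1 /\ Wp v1 v2 z <> v2 /\ cross v1 v2 (Wp v1 v2 z) <> 0 /\
   (z > 0 -> cross v1 v2 (Wp v1 v2 z) > 0) /\ (z < 0 -> cross v1 v2 (Wp v1 v2 z) < 0).
Proof.
  intro Hz. pose proof (W_gam v1 v2 z H1 H2 Hne) as G.
  pose proof (WN_pos v1 v2 z H1 H2 Hne). pose proof (EE_pos _ _ Hne).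
  assert (Gp : EE v1 v2 * EE v1 v2 / (2 * WN v1 v2 z) > 0).
  { apply Rdiv_lt_0_compat; nra. }
  assert (G' : cross v1 v2 (Wp v1 v2 z) = z * (EE v1 v2 * EE v1 v2 / (2 * WN v1 v2 z))) by (rewrite G; field; lra).
  assert (Gn : cross v1 v2 (Wp v1 v2 z) <> 0) by (rewrite G'; apply Rmult_integral_contrapositive_currified; lra).
  split; [intro E; apply Gn; rewrite E; apply gam_v1|].
  split; [intro E; apply Gn; rewrite E; apply gam_v2|].
  split; [auto|]. rewrite G'. split; intro; nra.
Qed.

Lemma tau_pos (w : point) : cross v1 v2 P > 0 ->
  (tau_set P1 P2 v1 v2 n P w <-> exists u, Qa * u * u + Qb * u + Qc = 0 /\ w = Wp v1 v2 u).
Proof.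
  intro GP. pose proof mu_gt1 as Hmu. pose proof Qc_pos. pose proof Qa_pos. unfold tau_set. split.
  - intros [Hw [Hw1 [Hw2 [Hww Hc]]]]. unfold collinear in Hc.
    pose proof (gam_ne0 w Hw Hw1 Hw2) as Gw.
    destruct (Rtotal_order (cross v1 v2 w) 0) as [Gl|[Ge|Gg]]; [| contradiction |].
    + destruct (iterB v1 v2 a1 a2 H1 H2 Hne Ha1 Ha12 Ha2 n w Hw Gl) as [Hu [Gu Zu]].
      fold P1 P2 in Hu, Gu, Zu.
      set (w' := iter_pt (psi_seg P1 P2) (2 * n) w) in *. fold mu in Zu.
      assert (Ew : Wp v1 v2 (zc v1 v2 w) = w) by (apply W_zc; auto).
      assert (Eu : Wp v1 v2 (zc v1 v2 w') = w') by (apply W_zc; auto; lra).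
      rewrite <- Ew, <- Eu in Hc. apply chord0 in Hc.
      pose proof (proj2 (zc_sign v1 v2 w' H1 Hu ltac:(lra)) Gu).
      exfalso. destruct Hc as [Hc|Hc].
      * apply Hww. rewrite <- Ew, <- Eu, Hc; reflexivity.
      * rewrite <- Zu in Hc. set (z := zc v1 v2 w') in *.
        assert (Qa * z * z + Qb * z + Qc = 0) by (rewrite <- Hc; unfold Qa, Qb, Qc; ring).
        destruct (root_sign z H4). specialize (H5 GP). lra.
    + destruct (iterA v1 v2 a1 a2 H1 H2 Hne Ha1 Ha12 Ha2 n w Hw Gg) as [Hu [Gu Zu]].
      fold P1 P2 in Hu, Gu, Zu.
      set (w' := iter_pt (psi_seg P1 P2) (2 * n) w) in *. fold mu in Zu.
      assert (Ew : Wp v1 v2 (zc v1 v2 w) = w) by (apply W_zc; auto).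
      assert (Eu : Wp v1 v2 (zc v1 v2 w') = w') by (apply W_zc; auto; lra).
      rewrite <- Ew, <- Eu in Hc. apply chord0 in Hc.
      exists (zc v1 v2 w). split; [|auto].
      destruct Hc as [Hc|Hc].
      * exfalso. apply Hww. rewrite <- Ew, <- Eu, Hc; reflexivity.
      * rewrite Zu in Hc. rewrite <- Hc; unfold Qa, Qb, Qc; ring.
  - intros [u [Hu ->]].
    destruct (root_sign u Hu) as [S _]. specialize (S GP).
    destruct (W_ne u ltac:(lra)) as [A [B [C [D _]]]]. specialize (D S).
    pose proof (W_S1 v1 v2 u H1 H2 Hne) as Hw.
    split; [auto|]. split; [auto|]. split; [auto|].
    destruct (iterA v1 v2 a1 a2 H1 H2 Hne Ha1 Ha12 Ha2 n _ Hw D) as [Hu' [Gu Zu]].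
    fold P1 P2 in Hu', Gu, Zu. fold mu in Zu. rewrite zc_W in Zu by (auto; lra).
    set (w' := iter_pt (psi_seg P1 P2) (2 * n) (Wp v1 v2 u)) in *.
    assert (Eu : Wp v1 v2 (zc v1 v2 w') = w') by (apply W_zc; auto; lra).
    rewrite Zu in Eu. rewrite <- Eu. split.
    + intro E. assert (zc v1 v2 (Wp v1 v2 (mu * u)) = zc v1 v2 (Wp v1 v2 u)) by (rewrite E; auto).
      rewrite !zc_W in H3 by (auto; nra). nra.
    + unfold collinear. apply chord0. right. rewrite <- Hu. unfold Qa, Qb, Qc; ring.
Qed.

Lemma tau_neg (w : point) : cross v1 v2 P < 0 ->
  (tau_set P1 P2 v1 v2 n P w <-> exists u, Qa * u * u + Qb * u + Qc = 0 /\ w = Wp v1 v2 (mu * u)).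
Proof.
  intro GP. pose proof mu_gt1 as Hmu. pose proof Qc_pos. pose proof Qa_pos. unfold tau_set. split.
  - intros [Hw [Hw1 [Hw2 [Hww Hc]]]]. unfold collinear in Hc.
    pose proof (gam_ne0 w Hw Hw1 Hw2) as Gw.
    destruct (Rtotal_order (cross v1 v2 w) 0) as [Gl|[Ge|Gg]]; [| contradiction |].
    + destruct (iterB v1 v2 a1 a2 H1 H2 Hne Ha1 Ha12 Ha2 n w Hw Gl) as [Hu [Gu Zu]].
      fold P1 P2 in Hu, Gu, Zu.
      set (w' := iter_pt (psi_seg P1 P2) (2 * n) w) in *. fold mu in Zu.
      assert (Ew : Wp v1 v2 (zc v1 v2 w) = w) by (apply W_zc; auto).
      assert (Eu : Wp v1 v2 (zc v1 v2 w') = w') by (apply W_zc; auto; lra).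
      rewrite <- Ew, <- Eu in Hc. apply chord0 in Hc.
      exists (zc v1 v2 w'). split.
      * destruct Hc as [Hc|Hc].
        -- exfalso. apply Hww. rewrite <- Ew, <- Eu, Hc; reflexivity.
        -- rewrite <- Zu in Hc. rewrite <- Hc; unfold Qa, Qb, Qc; ring.
      * rewrite Rmult_comm, Zu. auto.
    + destruct (iterA v1 v2 a1 a2 H1 H2 Hne Ha1 Ha12 Ha2 n w Hw Gg) as [Hu [Gu Zu]].
      fold P1 P2 in Hu, Gu, Zu.
      set (w' := iter_pt (psi_seg P1 P2) (2 * n) w) in *. fold mu in Zu.
      assert (Ew : Wp v1 v2 (zc v1 v2 w) = w) by (apply W_zc; auto).
      assert (Eu : Wp v1 v2 (zc v1 v2 w') = w') by (apply W_zc; auto; lra).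
      rewrite <- Ew, <- Eu in Hc. apply chord0 in Hc.
      pose proof (proj1 (zc_sign v1 v2 w H1 Hw ltac:(lra)) Gg).
      exfalso. destruct Hc as [Hc|Hc].
      * apply Hww. rewrite <- Ew, <- Eu, Hc; reflexivity.
      * rewrite Zu in Hc. set (z := zc v1 v2 w) in *.
        assert (Qa * z * z + Qb * z + Qc = 0) by (rewrite <- Hc; unfold Qa, Qb, Qc; ring).
        destruct (root_sign z H4). specialize (H6 GP). lra.
  - intros [u [Hu ->]].
    destruct (root_sign u Hu) as [_ S]. specialize (S GP).
    assert (S' : mu * u < 0) by nra.
    destruct (W_ne (mu * u) ltac:(lra)) as [A [B [C [_ D]]]]. specialize (D S').
    pose proof (W_S1 v1 v2 (mu * u) H1 H2 Hne) as Hw.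
    split; [auto|]. split; [auto|]. split; [auto|].
    destruct (iterB v1 v2 a1 a2 H1 H2 Hne Ha1 Ha12 Ha2 n _ Hw D) as [Hu' [Gu Zu]].
    fold P1 P2 in Hu', Gu, Zu. fold mu in Zu. rewrite zc_W in Zu by (auto; lra).
    set (w' := iter_pt (psi_seg P1 P2) (2 * n) (Wp v1 v2 (mu * u))) in *.
    assert (Zu' : zc v1 v2 w' = u).
    { apply (Rmult_eq_reg_r mu); [|lra]. rewrite Zu. ring. }
    assert (Eu : Wp v1 v2 (zc v1 v2 w') = w') by (apply W_zc; auto; lra).
    rewrite Zu' in Eu. rewrite <- Eu. split.
    + intro E. assert (zc v1 v2 (Wp v1 v2 u) = zc v1 v2 (Wp v1 v2 (mu * u))) by (rewrite E; auto).
      rewrite !zc_W in H3 by (auto; nra). nra.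
    + unfold collinear. apply chord0. right. rewrite <- Hu. unfold Qa, Qb, Qc; ring.
Qed.

End Tau.
Lemma col3 (A B X Y : point) : A <> B -> cross A B X = 0 -> cross A B Y = 0 -> cross X Y A = 0.
Proof.
  intros Hne HX HY. destruct A as [a1 a2], B as [b1 b2], X as [x1 x2], Y as [y1 y2].
  unfold cross in *; simpl in *.
  assert (Hf : (b1 - a1) * (b1 - a1) + (b2 - a2) * (b2 - a2) > 0).
  { destruct (Req_dec a1 b1); destruct (Req_dec a2 b2); subst; try (exfalso; auto; fail); nra. }
  assert (K : ((b1 - a1) * (b1 - a1) + (b2 - a2) * (b2 - a2)) * ((y1 - x1) * (a2 - x2) - (y2 - x2) * (a1 - x1))
    = ((b1 - a1) * (x1 - a1) + (b2 - a2) * (x2 - a2)) * ((b1 - a1) * (y2 - a2) - (b2 - a2) * (y1 - a1))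
    - ((b1 - a1) * (x2 - a2) - (b2 - a2) * (x1 - a1)) * ((b1 - a1) * (y1 - a1) + (b2 - a2) * (y2 - a2))) by ring.
  rewrite HX, HY in K. apply (Rmult_eq_reg_l ((b1 - a1) * (b1 - a1) + (b2 - a2) * (b2 - a2))); [|lra].
  rewrite K. ring.
Qed.

Lemma on_line (A B X : point) :
  (fst B - fst A) * (fst B - fst A) + (snd B - snd A) * (snd B - snd A) > 0 -> cross A B X = 0 ->
  exists t, X = (fst A + t * (fst B - fst A), snd A + t * (snd B - snd A)).
Proof.
  intros HN Hc. destruct A as [a b], B as [c d], X as [x y]; unfold cross in *; simpl in *.
  set (N := (c - a) * (c - a) + (d - b) * (d - b)) in *.
  exists (((x - a) * (c - a) + (y - b) * (d - b)) / N). f_equal.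
  - apply (Rmult_eq_reg_r N); [|lra].
    assert (K : (x - a) * N - ((x - a) * (c - a) + (y - b) * (d - b)) * (c - a)
       = - (d - b) * ((c - a) * (y - b) - (d - b) * (x - a))) by (unfold N; ring).
    rewrite Hc, Rmult_0_r in K. field_simplify; lra.
  - apply (Rmult_eq_reg_r N); [|lra].
    assert (K : (y - b) * N - ((x - a) * (c - a) + (y - b) * (d - b)) * (d - b)
       = (c - a) * ((c - a) * (y - b) - (d - b) * (x - a))) by (unfold N; ring).
    rewrite Hc, Rmult_0_r in K. field_simplify; lra.
Qed.

Definition gfun (Y : R) : R := (Y + 1) * (Y + 1) / (4 * Y).

Lemma chord_ends_exists (P Q : point) : P <> Q -> inD P -> inD Q ->
  exists u, chord_ends_spec P Q u.
Proof.
  intros Hne HP HQ. rewrite inD_m in HP, HQ.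
  destruct P as [p1 p2], Q as [q1 q2]; simpl in *.
  set (a := (q1 - p1) * (q1 - p1) + (q2 - p2) * (q2 - p2)).
  set (b := p1 * (q1 - p1) + p2 * (q2 - p2)).
  set (c := p1 * p1 + p2 * p2 - 1).
  assert (Ha : a > 0).
  { unfold a. destruct (Req_dec p1 q1); destruct (Req_dec p2 q2); subst; try (exfalso; auto; fail); nra. }
  assert (Hd : b * b - a * c > 0) by (unfold c; nra).
  set (s := sqrt (b * b - a * c)).
  assert (Hs : s > 0) by (apply sqrt_lt_R0; lra).
  assert (Hss : s * s = b * b - a * c) by (apply sqrt_sqrt; lra).
  set (t1 := (- b - s) / a). set (t2 := (- b + s) / a).
  assert (A1 : a * t1 = - b - s) by (unfold t1; field; lra).
  assert (A2 : a * t2 = - b + s) by (unfold t2; field; lra).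
  assert (R1 : a * t1 * t1 + 2 * b * t1 + c = 0).
  { apply (Rmult_eq_reg_l a); [|lra].
    transitivity ((a * t1) * (a * t1) + 2 * b * (a * t1) + a * c); [ring|]. rewrite A1. nra. }
  assert (R2 : a * t2 * t2 + 2 * b * t2 + c = 0).
  { apply (Rmult_eq_reg_l a); [|lra].
    transitivity ((a * t2) * (a * t2) + 2 * b * (a * t2) + a * c); [ring|]. rewrite A2. nra. }
  exists ((p1 + t1 * (q1 - p1), p2 + t1 * (q2 - p2)), (p1 + t2 * (q1 - p1), p2 + t2 * (q2 - p2))).
  unfold chord_ends_spec, collinear, cross; simpl. rewrite !onS1_m; simpl.
  split; [unfold a, b, c in R1; nra|]. split; [unfold a, b, c in R2; nra|].
  split; [|split; ring].
  intro E. injection E. intros E2 E1.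
  assert (t1 <> t2).
  { intro F. rewrite F in A1. lra. }
  assert ((t1 - t2) * (q1 - p1) = 0) by lra. assert ((t1 - t2) * (q2 - p2) = 0) by lra.
  assert (q1 - p1 = 0) by (apply (Rmult_eq_reg_l (t1 - t2)); lra).
  assert (q2 - p2 = 0) by (apply (Rmult_eq_reg_l (t1 - t2)); lra).
  unfold a in Ha. nra.
Qed.

Lemma fin_alg (a b c t1 t2 : R) : a > 0 -> a * (t1 + t2) = -2 * b -> a * (t1 * t2) = c -> c < 0 ->
  a + 2 * b + c < 0 ->
  ((t1 + t2) - 2 * (t1 * t2)) * ((t1 + t2) - 2 * (t1 * t2)) / (4 * ((t1 * t2) * (1 - (t1 + t2) + t1 * t2)))
  = (b + c) * (b + c) / (c * (a + 2 * b + c)).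
Proof.
  intros Ha S Pp Hc Hq.
  assert (S' : t1 + t2 = -2 * b / a) by (rewrite <- S; field; lra).
  assert (P' : t1 * t2 = c / a) by (rewrite <- Pp; field; lra).
  rewrite S', P'. field. repeat split; lra.
Qed.

Lemma gfun_frac (N M : R) : N > 0 -> M > 0 -> gfun (N / M) = (N + M) * (N + M) / (4 * (N * M)).
Proof. intros. unfold gfun. field. lra. Qed.

Lemma exp_ge1 (x : R) : 0 <= x -> exp x >= 1.
Proof.
  intro H. destruct H as [H|H].
  - apply exp_increasing in H. rewrite exp_0 in H. lra.
  - rewrite <- H, exp_0. lra.
Qed.

Lemma exp_abs_ln (r : R) : r > 0 -> exp (Rabs (ln r)) >= 1 /\ gfun (exp (Rabs (ln r))) = gfun r.
Proof.
  intro Hr. split; [apply exp_ge1, Rabs_pos|].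
  destruct (Rle_or_lt 0 (ln r)) as [H|H].
  - rewrite Rabs_right by lra. rewrite exp_ln by auto. auto.
  - rewrite Rabs_left by lra. rewrite exp_Ropp, exp_ln by auto.
    unfold gfun. field. lra.
Qed.

Lemma edist_line (P Q : point) (t : R) :
  let u := (fst P + t * (fst Q - fst P), snd P + t * (snd Q - snd P)) in
  let a := (fst Q - fst P) * (fst Q - fst P) + (snd Q - snd P) * (snd Q - snd P) in
  edist u P = Rabs t * sqrt a /\ edist u Q = Rabs (t - 1) * sqrt a.
Proof.
  intros u a. unfold edist, u; cbn [fst snd]. split.
  - replace ((fst P + t * (fst Q - fst P) - fst P) ^ 2 + (snd P + t * (snd Q - snd P) - snd P) ^ 2)
      with (Rsqr t * a) by (unfold Rsqr, a; ring).
    rewrite sqrt_mult_alt, sqrt_Rsqr_abs; [auto|apply Rle_0_sqr].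
  - replace ((fst P + t * (fst Q - fst P) - fst Q) ^ 2 + (snd P + t * (snd Q - snd P) - snd Q) ^ 2)
      with (Rsqr (t - 1) * a) by (unfold Rsqr, a; ring).
    rewrite sqrt_mult_alt, sqrt_Rsqr_abs; [auto|apply Rle_0_sqr].
Qed.

Lemma cross_swap12 (A B X : point) : cross B A X = - cross A B X.
Proof. destruct A, B, X; unfold cross; simpl; ring. Qed.

Lemma dK_cosh (P Q : point) : P <> Q -> inD P -> inD Q ->
  exp (2 * dK P Q) >= 1 /\
  gfun (exp (2 * dK P Q)) = (1 - dot P Q) * (1 - dot P Q) / ((1 - dot P P) * (1 - dot Q Q)).
Proof.
  intros Hne HP HQ.
  assert (S : chord_ends_spec P Q (chord_ends P Q)).
  { unfold chord_ends. apply epsilon_spec. apply chord_ends_exists; auto. }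
  unfold dK. destruct (chord_ends P Q) as [u1 u2]. simpl.
  destruct S as [Hu1 [Hu2 [Hne12 [C1 C2]]]]. simpl in *. unfold collinear in *.
  set (a := (fst Q - fst P) * (fst Q - fst P) + (snd Q - snd P) * (snd Q - snd P)).
  assert (Ha : a > 0).
  { unfold a. destruct P as [p1 p2], Q as [q1 q2]; simpl.
    destruct (Req_dec p1 q1); destruct (Req_dec p2 q2); subst; try (exfalso; auto; fail); nra. }
  assert (Cu1 : cross P Q u1 = 0) by (apply col3 with u2; auto).
  assert (Cu2 : cross P Q u2 = 0).
  { apply col3 with u1; auto. rewrite cross_swap12, C1; ring. rewrite cross_swap12, C2; ring. }
  destruct (on_line P Q u1 Ha Cu1) as [t1 E1]. destruct (on_line P Q u2 Ha Cu2) as [t2 E2].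
  subst u1 u2.
  destruct (edist_line P Q t1) as [D1P D1Q]. destruct (edist_line P Q t2) as [D2P D2Q].
  fold a in D1P, D1Q, D2P, D2Q. rewrite D1P, D1Q, D2P, D2Q.
  assert (Hsa : sqrt a > 0) by (apply sqrt_lt_R0; lra).
  assert (Ht12 : t1 <> t2) by (intro E; apply Hne12; rewrite E; auto).
  rewrite inD_m in HP, HQ. rewrite onS1_m in Hu1, Hu2. simpl in Hu1, Hu2.
  destruct P as [p1 p2], Q as [q1 q2]. simpl in *. unfold dot; simpl.
  set (b := p1 * (q1 - p1) + p2 * (q2 - p2)).
  set (c := p1 * p1 + p2 * p2 - 1).
  assert (R1 : a * t1 * t1 + 2 * b * t1 + c = 0) by (unfold a, b, c; nra).
  assert (R2 : a * t2 * t2 + 2 * b * t2 + c = 0) by (unfold a, b, c; nra).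
  assert (Vs : a * (t1 + t2) = -2 * b).
  { assert (K : (t1 - t2) * (a * (t1 + t2) + 2 * b) = 0)
      by (transitivity ((a * t1 * t1 + 2 * b * t1 + c) - (a * t2 * t2 + 2 * b * t2 + c)); [ring|rewrite R1, R2; ring]).
    apply Rmult_integral in K. destruct K; lra. }
  assert (Vp : a * (t1 * t2) = c) by nra.
  assert (Hc : c < 0) by (unfold c; lra).
  assert (Hq : a + 2 * b + c < 0) by (unfold a, b, c; nra).
  assert (Out : forall t, a * t * t + 2 * b * t + c = 0 -> t < 0 \/ t > 1).
  { intros t Ht. destruct (Rlt_or_le t 0); [left; auto|]. destruct (Rlt_or_le 1 t); [right; auto|].
    exfalso. assert (K : a * t * t + 2 * b * t + c = (1 - t) * c + t * (a + 2 * b + c) - a * t * (1 - t)) by ring.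
    assert (0 <= a * t * (1 - t)) by (apply Rmult_le_pos; [apply Rmult_le_pos|]; lra).
    assert ((1 - t) * c <= 0) by nra.
    assert (t * (a + 2 * b + c) <= 0) by nra.
    destruct (Req_dec t 0); [subst; lra|]. assert ((1 - t) * c < 0 \/ t * (a + 2 * b + c) < 0).
    { destruct (Req_dec t 1); [right; subst; lra|left; nra]. }
    lra. }
  assert (Hp : t1 * t2 < 0).
  { assert (a * (t1 * t2) < 0) by lra. nra. }
  set (r := Rabs (t1 - 1) * sqrt a * (Rabs t2 * sqrt a) / (Rabs t1 * sqrt a * (Rabs (t2 - 1) * sqrt a))).
  assert (Er : r = (Rabs (t1 - 1) * Rabs t2) / (Rabs t1 * Rabs (t2 - 1))).
  { assert (X1 : Rabs t1 > 0) by (destruct (Out t1 R1); [rewrite Rabs_left| rewrite Rabs_right]; lra).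
    assert (X2 : Rabs (t2 - 1) > 0) by (destruct (Out t2 R2); [rewrite Rabs_left| rewrite Rabs_right]; lra).
    unfold r. field. repeat split; lra. }
  replace (2 * (/ 2 * Rabs (ln r))) with (Rabs (ln r)) by field.
  assert (Key : ((t1 + t2) - 2 * (t1 * t2)) * ((t1 + t2) - 2 * (t1 * t2)) / (4 * ((t1 * t2) * (1 - (t1 + t2) + t1 * t2)))
     = (1 - (p1 * q1 + p2 * q2)) * (1 - (p1 * q1 + p2 * q2)) / ((1 - (p1 * p1 + p2 * p2)) * (1 - (q1 * q1 + q2 * q2)))).
  { rewrite (fin_alg a b c t1 t2 Ha Vs Vp Hc Hq). unfold a, b, c. field. split; nra. }
  destruct (Out t1 R1) as [T1|T1].
  - assert (T2 : t2 > 1) by (destruct (Out t2 R2); nra).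
    rewrite Er in *. rewrite (Rabs_left t1), (Rabs_left (t1 - 1)), (Rabs_right t2), (Rabs_right (t2 - 1)) by lra.
    assert (Nq : - (t1 - 1) * t2 > 0) by nra. assert (Mq : - t1 * (t2 - 1) > 0) by nra.
    destruct (exp_abs_ln (- (t1 - 1) * t2 / (- t1 * (t2 - 1)))) as [G1 G2].
    { apply Rdiv_lt_0_compat; lra. }
    split; [auto|]. rewrite G2, gfun_frac by auto. rewrite <- Key. f_equal; ring.
  - assert (T2 : t2 < 0) by (destruct (Out t2 R2); nra).
    rewrite Er in *. rewrite (Rabs_right t1), (Rabs_right (t1 - 1)), (Rabs_left t2), (Rabs_left (t2 - 1)) by lra.
    assert (Nq : (t1 - 1) * - t2 > 0) by nra. assert (Mq : t1 * - (t2 - 1) > 0) by nra.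
    destruct (exp_abs_ln ((t1 - 1) * - t2 / (t1 * - (t2 - 1)))) as [G1 G2].
    { apply Rdiv_lt_0_compat; lra. }
    split; [auto|]. rewrite G2, gfun_frac by auto. rewrite <- Key. f_equal; ring.
Qed.
Lemma gfun_lt (Y1 Y2 : R) : 1 <= Y1 -> Y1 < Y2 -> gfun Y1 < gfun Y2.
Proof.
  intros H1 H2. unfold gfun.
  assert (gfun Y2 - gfun Y1 = (Y2 - Y1) * (Y1 * Y2 - 1) / (4 * Y1 * Y2)) by (unfold gfun; field; lra).
  unfold gfun in H. assert ((Y2 - Y1) * (Y1 * Y2 - 1) / (4 * Y1 * Y2) > 0).
  { apply Rdiv_lt_0_compat; [apply Rmult_lt_0_compat; nra|nra]. }
  lra.
Qed.

Lemma gfun_inj (Y1 Y2 : R) : 1 <= Y1 -> 1 <= Y2 -> gfun Y1 = gfun Y2 -> Y1 = Y2.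
Proof.
  intros H1 H2 E. destruct (Rtotal_order Y1 Y2) as [L|[L|L]]; auto.
  - pose proof (gfun_lt Y1 Y2 H1 L). lra.
  - pose proof (gfun_lt Y2 Y1 H2 L). lra.
Qed.

Lemma gfun_le_inv (Y1 Y2 : R) : 1 <= Y1 -> 1 <= Y2 -> gfun Y1 <= gfun Y2 -> Y1 <= Y2.
Proof.
  intros H1 H2 E. destruct (Rle_or_lt Y1 Y2) as [L|L]; auto.
  pose proof (gfun_lt Y2 Y1 H2 L). lra.
Qed.

Lemma exp_INR_mult (n : nat) (x : R) : exp (INR n * x) = exp x ^ n.
Proof.
  induction n as [|k IH].
  - simpl. rewrite Rmult_0_l, exp_0. reflexivity.
  - rewrite S_INR. replace ((INR k + 1) * x) with (INR k * x + x) by ring.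
    rewrite exp_plus, IH. simpl. ring.
Qed.

Lemma exp_lt_inv (x y : R) : exp x < exp y -> x < y.
Proof.
  intro H. destruct (Rlt_or_le x y) as [L|L]; auto.
  destruct L as [L|L]; [apply exp_increasing in L; lra|subst; lra].
Qed.

Lemma dK_ge0 (P Q : point) : 0 <= dK P Q.
Proof. unfold dK. pose proof (Rabs_pos (ln ((edist (fst (chord_ends P Q)) Q * edist (snd (chord_ends P Q)) P /
  (edist (fst (chord_ends P Q)) P * edist (snd (chord_ends P Q)) Q))))). lra.
Qed.

Lemma Lp_on (v1 v2 : point) (s : R) : onS1 v1 -> onS1 v2 ->
  1 - dot (Lp v1 v2 s) (Lp v1 v2 s) = s * (1 - s) * EE v1 v2.
Proof.
  intros H1 H2. pose proof (v1e _ _ H1 H2) as He. rewrite onS1_m in H1.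
  destruct v1 as [x1 y1], v2 as [x2 y2]; unfold Lp, dot, EE in *; simpl in *.
  transitivity (1 - (x1 * x1 + y1 * y1) - 2 * s * (x1 * (x2 - x1) + y1 * (y2 - y1))
     - s * s * ((x2 - x1) * (x2 - x1) + (y2 - y1) * (y2 - y1))); [ring|].
  rewrite H1, He. field.
Qed.

Lemma Lp_dot (v1 v2 P : point) (s : R) :
  1 - dot P (Lp v1 v2 s) = (1 - s) * (1 - dot v1 P) + s * (1 - dot v2 P).
Proof. destruct v1, v2, P; unfold Lp, dot; simpl; ring. Qed.

Lemma id5p (v1 v2 P : point) : onS1 v1 -> onS1 v2 ->
  4 * cross v1 v2 P * cross v1 v2 P =
  4 * EE v1 v2 * (1 - dot v1 P) * (1 - dot v2 P) - EE v1 v2 * EE v1 v2 * (1 - dot P P).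
Proof.
  intros H1 H2. rewrite onS1_m in H1, H2.
  destruct v1 as [x1 y1], v2 as [x2 y2], P as [px py]; unfold cross, EE, dot in *; simpl in *. nsatz.
Qed.
Section Delta.
Variables (v1 v2 : point) (a1 a2 : R) (P : point).
Hypotheses (H1 : onS1 v1) (H2 : onS1 v2) (Hne : v1 <> v2) (Ha1 : 0 < a1) (Ha12 : a1 < a2) (Ha2 : a2 < 1)
  (HP : inD P) (HgP : cross v1 v2 P <> 0).

Let al := 1 - dot v1 P.
Let be := 1 - dot v2 P.
Definition Cmin := 4 * (1 - dot v1 P) * (1 - dot v2 P) / ((1 - dot P P) * EE v1 v2).
Definition s0 := (1 - dot v1 P) / ((1 - dot v1 P) + (1 - dot v2 P)).

Lemma al_pos : al > 0.
Proof. unfold al. pose proof (dot_lt1 v1 P H1 HP). lra. Qed.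
Lemma be_pos : be > 0.
Proof. unfold be. pose proof (dot_lt1 v2 P H2 HP). lra. Qed.
Lemma PP_pos : 1 - dot P P > 0.
Proof. rewrite inD_m in HP. unfold dot. lra. Qed.

Lemma s0_in : 0 < s0 < 1.
Proof.
  pose proof al_pos. pose proof be_pos. unfold s0; fold al be. split.
  - apply Rdiv_lt_0_compat; lra.
  - apply (Rmult_lt_reg_r (al + be)); [lra|]. field_simplify; lra.
Qed.

Lemma line_param (S : point) : inD S -> collinear (Lp v1 v2 a1) (Lp v1 v2 a2) S ->
  exists s, 0 < s < 1 /\ S = Lp v1 v2 s.
Proof.
  intros HS Hc. pose proof (EE_pos _ _ Hne) as HE.
  assert (HN : (fst (Lp v1 v2 a2) - fst (Lp v1 v2 a1)) * (fst (Lp v1 v2 a2) - fst (Lp v1 v2 a1)) +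
     (snd (Lp v1 v2 a2) - snd (Lp v1 v2 a1)) * (snd (Lp v1 v2 a2) - snd (Lp v1 v2 a1)) > 0).
  { replace (_ + _) with ((a2 - a1) * (a2 - a1) * EE v1 v2) by (destruct v1, v2; unfold Lp, EE; simpl; ring).
    apply Rmult_gt_0_compat; nra. }
  destruct (on_line _ _ _ HN Hc) as [t Et].
  set (s := a1 + t * (a2 - a1)).
  assert (Es : S = Lp v1 v2 s) by (rewrite Et; unfold s; destruct v1, v2; unfold Lp; simpl; f_equal; ring).
  exists s. split; auto.
  pose proof (Lp_on v1 v2 s H1 H2) as K. rewrite <- Es in K.
  rewrite inD_m in HS. unfold dot in K.
  assert (s * (1 - s) > 0).
  { assert (s * (1 - s) * EE v1 v2 > 0) by lra.
    destruct (Rle_or_lt (s * (1 - s)) 0); [|auto]. nra. }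
  split; nra.
Qed.

Lemma Cf_val (s : R) : 0 < s < 1 ->
  (1 - dot P (Lp v1 v2 s)) * (1 - dot P (Lp v1 v2 s)) / ((1 - dot P P) * (1 - dot (Lp v1 v2 s) (Lp v1 v2 s)))
  = Cmin + ((1 - s) * al - s * be) * ((1 - s) * al - s * be) / ((1 - dot P P) * (s * (1 - s) * EE v1 v2)).
Proof.
  intro Hs. pose proof PP_pos. pose proof (EE_pos _ _ Hne).
  rewrite Lp_on by auto. rewrite Lp_dot. unfold Cmin. fold al be.
  field. split; [nra|]. split; lra.
Qed.

Lemma Cf_s0 :
  (1 - dot P (Lp v1 v2 s0)) * (1 - dot P (Lp v1 v2 s0)) / ((1 - dot P P) * (1 - dot (Lp v1 v2 s0) (Lp v1 v2 s0)))
  = Cmin.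
Proof.
  rewrite Cf_val by apply s0_in. pose proof al_pos. pose proof be_pos.
  replace ((1 - s0) * al - s0 * be) with 0 by (unfold s0; fold al be; field; lra). 
  unfold Rdiv. rewrite !Rmult_0_l. ring.
Qed.

Lemma Cf_ge (s : R) : 0 < s < 1 ->
  (1 - dot P (Lp v1 v2 s)) * (1 - dot P (Lp v1 v2 s)) / ((1 - dot P P) * (1 - dot (Lp v1 v2 s) (Lp v1 v2 s)))
  >= Cmin.
Proof.
  intro Hs. rewrite Cf_val by auto. pose proof PP_pos. pose proof (EE_pos _ _ Hne).
  assert (((1 - s) * al - s * be) * ((1 - s) * al - s * be) / ((1 - dot P P) * (s * (1 - s) * EE v1 v2)) >= 0).
  { apply Rle_ge. apply Rmult_le_pos; [apply Rle_0_sqr|]. left. apply Rinv_0_lt_compat.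
    apply Rmult_lt_0_compat; [lra|]. apply Rmult_lt_0_compat; [nra|lra]. }
  lra.
Qed.

Lemma P_neq_L (s : R) : P <> Lp v1 v2 s.
Proof.
  intro E. apply HgP. rewrite E. destruct v1, v2; unfold cross, Lp; simpl; ring.
Qed.

Lemma delta_val : gfun (exp (2 * delta (Lp v1 v2 a1) (Lp v1 v2 a2) P)) = Cmin /\
   exp (2 * delta (Lp v1 v2 a1) (Lp v1 v2 a2) P) >= 1.
Proof.
  pose proof s0_in as Hs0.
  assert (HS0 : inD (Lp v1 v2 s0)) by (apply Lp_inD; auto).
  destruct (dK_cosh P (Lp v1 v2 s0) (P_neq_L s0) HP HS0) as [G0 E0].
  rewrite Cf_s0 in E0.
  assert (Min : forall S, inD S -> collinear (Lp v1 v2 a1) (Lp v1 v2 a2) S -> dK P (Lp v1 v2 s0) <= dK P S).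
  { intros S HS Hc. destruct (line_param S HS Hc) as [s [Hs ->]].
    destruct (dK_cosh P (Lp v1 v2 s) (P_neq_L s) HP HS) as [G1 E1].
    pose proof (Cf_ge s Hs) as C1. rewrite <- E1, <- E0 in C1.
    assert (exp (2 * dK P (Lp v1 v2 s0)) <= exp (2 * dK P (Lp v1 v2 s))) by (apply gfun_le_inv; lra).
    destruct H as [H|H].
    - apply exp_lt_inv in H. lra.
    - apply exp_inv in H. lra. }
  assert (Hc0 : collinear (Lp v1 v2 a1) (Lp v1 v2 a2) (Lp v1 v2 s0)).
  { unfold collinear. destruct v1, v2; unfold cross, Lp; simpl; ring. }
  assert (ID : is_delta (Lp v1 v2 a1) (Lp v1 v2 a2) P (dK P (Lp v1 v2 s0))).
  { split; [|exact Min]. exists (Lp v1 v2 s0). split; [auto|]. split; [auto|reflexivity]. }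
  assert (Ed : delta (Lp v1 v2 a1) (Lp v1 v2 a2) P = dK P (Lp v1 v2 s0)).
  { unfold delta. pose proof (epsilon_spec (inhabits 0) (is_delta (Lp v1 v2 a1) (Lp v1 v2 a2) P)
      (ex_intro _ _ ID)) as [[S [HS [Hc Em]]] Hall].
    set (m := epsilon (inhabits 0) (is_delta (Lp v1 v2 a1) (Lp v1 v2 a2) P)) in *.
    pose proof (Hall _ HS0 Hc0) as X.
    pose proof (Min S HS Hc). lra. }
  rewrite Ed. auto.
Qed.

End Delta.
Lemma Lp_dot2 (v1 v2 : point) (s t : R) : onS1 v1 -> onS1 v2 ->
  1 - dot (Lp v1 v2 s) (Lp v1 v2 t) = (s + t - 2 * s * t) * EE v1 v2 / 2.
Proof.
  intros H1 H2. pose proof (v1e _ _ H1 H2) as He. rewrite onS1_m in H1.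
  destruct v1 as [x1 y1], v2 as [x2 y2]; unfold Lp, dot, EE in *; simpl in *.
  transitivity (1 - (x1 * x1 + y1 * y1) - (s + t) * (x1 * (x2 - x1) + y1 * (y2 - y1))
     - s * t * ((x2 - x1) * (x2 - x1) + (y2 - y1) * (y2 - y1))); [ring|].
  rewrite H1, He. field.
Qed.

Section Final.
Variables (v1 v2 : point) (a1 a2 : R) (P : point) (n : nat).
Hypotheses (H1 : onS1 v1) (H2 : onS1 v2) (Hne : v1 <> v2) (Ha1 : 0 < a1) (Ha12 : a1 < a2) (Ha2 : a2 < 1)
  (HP : inD P) (HgP : cross v1 v2 P <> 0) (Hn : (0 < n)%nat).

Lemma d12 : exp (2 * dK (Lp v1 v2 a1) (Lp v1 v2 a2)) = R0 a1 a2.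
Proof.
  pose proof (EE_pos _ _ Hne) as HE.
  assert (Hn12 : Lp v1 v2 a1 <> Lp v1 v2 a2).
  { intro E. unfold Lp, EE in *. injection E. intros E2 E1.
    assert (X1 : (a2 - a1) * (fst v2 - fst v1) = 0) by lra.
    assert (X2 : (a2 - a1) * (snd v2 - snd v1) = 0) by lra.
    apply Rmult_integral in X1. apply Rmult_integral in X2.
    destruct X1 as [X1|X1]; [lra|]. destruct X2 as [X2|X2]; [lra|].
    rewrite X1, X2 in HE. lra. }
  destruct (dK_cosh _ _ Hn12 (Lp_inD v1 v2 a1 H1 H2 Hne ltac:(lra)) (Lp_inD v1 v2 a2 H1 H2 Hne ltac:(lra))) as [G E].
  rewrite !Lp_on, Lp_dot2 in E by auto.
  apply gfun_inj; [lra| pose proof (R0_gt1 a1 a2 Ha1 Ha12 Ha2); lra|].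
  rewrite E. unfold gfun, R0. field. repeat split; try lra; nra.
Qed.

Let d := dK (Lp v1 v2 a1) (Lp v1 v2 a2).
Let K := exp (INR n * d).

Lemma K_facts : K * K = mu a1 a2 n /\ K > 1.
Proof.
  pose proof d12 as D. fold d in D. pose proof (R0_gt1 a1 a2 Ha1 Ha12 Ha2).
  assert (Hd : d > 0).
  { assert (exp 0 < exp (2 * d)) by (rewrite exp_0; lra). apply exp_lt_inv in H0. lra. }
  split.
  - unfold K, mu. rewrite <- exp_plus. replace (INR n * d + INR n * d) with (INR n * (2 * d)) by ring.
    rewrite exp_INR_mult, D. auto.
  - unfold K. rewrite <- exp_0. apply exp_increasing. apply Rmult_lt_0_compat; [apply lt_0_INR; auto|lra].
Qed.

Lemma Delta_exp : exp (2 * DeltaK n (Lp v1 v2 a1) (Lp v1 v2 a2)) = ((K + 1) / (K - 1)) * ((K + 1) / (K - 1)).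
Proof.
  destruct K_facts as [_ HK]. unfold DeltaK. fold d K.
  assert (X : (K + 1) / (K - 1) > 0) by (apply Rdiv_lt_0_compat; lra).
  replace (2 * ln ((K + 1) / (K - 1))) with (ln ((K + 1) / (K - 1)) + ln ((K + 1) / (K - 1))) by ring.
  rewrite exp_plus, exp_ln by auto. auto.
Qed.

Lemma Disc_rel :
  let Y0 := exp (2 * delta (Lp v1 v2 a1) (Lp v1 v2 a2) P) in
  let YD := exp (2 * DeltaK n (Lp v1 v2 a1) (Lp v1 v2 a2)) in
  Y0 >= 1 /\ YD >= 1 /\
  4 * (Qb v1 v2 a1 a2 P n * Qb v1 v2 a1 a2 P n - 4 * Qa v1 v2 a1 a2 P n * Qc v1 P)
  = (gfun Y0 - gfun YD) * (EE v1 v2 * EE v1 v2 * (1 - dot P P) * (mu a1 a2 n - 1) * (mu a1 a2 n - 1)).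
Proof.
  intros Y0 YD.
  pose proof (delta_val v1 v2 a1 a2 P) as DV. repeat (specialize (DV ltac:(assumption))).
  destruct DV as [G0 Y01]. fold Y0 in G0, Y01.
  destruct K_facts as [KK HK].
  pose proof (Delta_exp) as DE. fold YD in DE.
  pose proof (EE_pos _ _ Hne) as HE. pose proof (PP_pos P HP) as Hpp.
  pose proof (id5p v1 v2 P H1 H2) as I5.
  split; [auto|]. split.
  - rewrite DE. assert ((K + 1) / (K - 1) > 1).
    { apply (Rmult_lt_reg_r (K - 1)); [lra|]. field_simplify; lra. }
    apply Rle_ge. nra.
  - rewrite G0, DE. rewrite <- KK. unfold Cmin, Qa, Qb, Qc. rewrite <- KK.
    set (g := cross v1 v2 P) in *. set (E := EE v1 v2) in *. set (pp := 1 - dot P P) in *.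
    set (al := 1 - dot v1 P) in *. set (be := 1 - dot v2 P) in *.
    assert (AB : al * be = (4 * g * g + E * E * pp) / (4 * E)).
    { apply (Rmult_eq_reg_r (4 * E)); [|lra]. field_simplify; [|lra]. lra. }
    replace (4 * al * be / (pp * E)) with (4 * (al * be) / (pp * E)) by (field; split; lra).
    replace (4 * (E * be * (K * K)) * al) with (4 * E * (K * K) * (al * be)) by ring.
    rewrite AB. unfold gfun. field. repeat split; lra.
Qed.

End Final.
Lemma edist_sym (A B : point) : edist A B = edist B A.
Proof. unfold edist. f_equal. ring. Qed.

Lemma neg_pos (x F : R) : x < 0 -> F > 0 -> x * F < 0.
Proof. intros. nra. Qed.
Lemma pos_pos (x F : R) : x > 0 -> F > 0 -> x * F > 0.
Proof. intros. nra. Qed.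

Theorem lemma5p1 (P1 P2 v1 v2 P : point) (n : nat) :
  inD P1 -> inD P2 -> P1 <> P2 ->
  onS1 v1 -> onS1 v2 -> v1 <> v2 ->
  collinear v1 v2 P1 -> collinear v1 v2 P2 ->
  edist v1 P1 < edist v1 P2 ->
  (0 < n)%nat ->
  inD P -> ~ collinear P1 P2 P ->
  (delta P1 P2 P < DeltaK n P1 P2 -> has_card (tau_set P1 P2 v1 v2 n P) 0) /\
  (delta P1 P2 P = DeltaK n P1 P2 -> has_card (tau_set P1 P2 v1 v2 n P) 1) /\
  (delta P1 P2 P > DeltaK n P1 P2 -> has_card (tau_set P1 P2 v1 v2 n P) 2).
Proof.
  intros HP1 HP2 HP12 H1 H2 Hne C1 C2 Hed Hn HP Hnc.
  pose proof (EE_pos _ _ Hne) as HE. pose proof HE as HE'. unfold EE in HE'.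
  destruct (on_line v1 v2 P1 HE' C1) as [a1 E1]. destruct (on_line v1 v2 P2 HE' C2) as [a2 E2].
  change (P1 = Lp v1 v2 a1) in E1. change (P2 = Lp v1 v2 a2) in E2. subst P1 P2.
  assert (Hin : forall a, inD (Lp v1 v2 a) -> 0 < a < 1).
  { intros a Ha. rewrite inD_m in Ha. pose proof (Lp_on v1 v2 a H1 H2) as K. unfold dot in K.
    assert (a * (1 - a) * EE v1 v2 > 0) by lra.
    assert (a * (1 - a) > 0) by (destruct (Rle_or_lt (a * (1 - a)) 0); [nra|auto]).
    split; nra. }
  destruct (Hin a1 HP1) as [Ha1 Ha1']. destruct (Hin a2 HP2) as [Ha2 Ha2'].
  assert (Ha12 : a1 < a2).
  { rewrite !(edist_sym v1) in Hed.
    destruct (edist_line v1 v2 a1) as [D1 _]. destruct (edist_line v1 v2 a2) as [D2 _].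
    change (edist (Lp v1 v2 a1) v1 = Rabs a1 * sqrt (EE v1 v2)) in D1.
    change (edist (Lp v1 v2 a2) v1 = Rabs a2 * sqrt (EE v1 v2)) in D2.
    rewrite D1, D2, !Rabs_right in Hed by lra.
    assert (sqrt (EE v1 v2) > 0) by (apply sqrt_lt_R0; lra). nra. }
  assert (HgP : cross v1 v2 P <> 0).
  { intro G. apply Hnc. unfold collinear.
    replace (cross (Lp v1 v2 a1) (Lp v1 v2 a2) P) with ((a2 - a1) * cross v1 v2 P)
      by (destruct v1, v2, P; unfold cross, Lp; simpl; ring).
    rewrite G; ring. }
  pose proof (Disc_rel v1 v2 a1 a2 P n) as DR.
  repeat (specialize (DR ltac:(assumption))). cbv zeta in DR.
  destruct DR as [Y0 [YD DR]].
  set (Dsc := Qb v1 v2 a1 a2 P n * Qb v1 v2 a1 a2 P n - 4 * Qa v1 v2 a1 a2 P n * Qc v1 P) in *.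
  pose proof (mu_gt1 a1 a2 n Ha1 Ha12 Ha2' Hn) as Hmu.
  pose proof (PP_pos P HP) as Hpp.
  assert (Fpos : EE v1 v2 * EE v1 v2 * (1 - dot P P) * (mu a1 a2 n - 1) * (mu a1 a2 n - 1) > 0).
  { repeat apply Rmult_gt_0_compat; lra. }
  set (F := EE v1 v2 * EE v1 v2 * (1 - dot P P) * (mu a1 a2 n - 1) * (mu a1 a2 n - 1)) in *.
  set (dl := delta (Lp v1 v2 a1) (Lp v1 v2 a2) P) in *.
  set (Dl := DeltaK n (Lp v1 v2 a1) (Lp v1 v2 a2)) in *.
  assert (Lt : dl < Dl -> Dsc < 0).
  { intro L. assert (exp (2 * dl) < exp (2 * Dl)) by (apply exp_increasing; lra).
    pose proof (gfun_lt (exp (2 * dl)) (exp (2 * Dl)) ltac:(lra) H).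
    pose proof (neg_pos (gfun (exp (2 * dl)) - gfun (exp (2 * Dl))) F ltac:(lra) Fpos). lra. }
  assert (Eq : dl = Dl -> Dsc = 0).
  { intro L. rewrite L in DR. rewrite Rminus_diag_eq, Rmult_0_l in DR by reflexivity. lra. }
  assert (Gt : dl > Dl -> Dsc > 0).
  { intro L. assert (exp (2 * Dl) < exp (2 * dl)) by (apply exp_increasing; lra).
    pose proof (gfun_lt (exp (2 * Dl)) (exp (2 * dl)) ltac:(lra) H).
    pose proof (pos_pos (gfun (exp (2 * dl)) - gfun (exp (2 * Dl))) F ltac:(lra) Fpos). lra. }
  pose proof (Qa_pos v1 v2 a1 a2 P n) as QA. repeat (specialize (QA ltac:(assumption))).
  pose proof (Qc_pos v1 P H1 HP) as QC.
  destruct (Rtotal_order (cross v1 v2 P) 0) as [G|[G|G]]; [|contradiction|].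
  - assert (HS : forall w, tau_set (Lp v1 v2 a1) (Lp v1 v2 a2) v1 v2 n P w <->
       exists u, Qa v1 v2 a1 a2 P n * u * u + Qb v1 v2 a1 a2 P n * u + Qc v1 P = 0 /\
                 w = Wp v1 v2 (mu a1 a2 n * u)).
    { intro w. eapply tau_neg; eauto. }
    assert (Hinj : forall u1 u2, Qa v1 v2 a1 a2 P n * u1 * u1 + Qb v1 v2 a1 a2 P n * u1 + Qc v1 P = 0 ->
       Qa v1 v2 a1 a2 P n * u2 * u2 + Qb v1 v2 a1 a2 P n * u2 + Qc v1 P = 0 ->
       Wp v1 v2 (mu a1 a2 n * u1) = Wp v1 v2 (mu a1 a2 n * u2) -> u1 = u2).
    { intros u1 u2 R1 R2 E.
      assert (u1 <> 0) by (intro Z; rewrite Z in R1; lra).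
      assert (u2 <> 0) by (intro Z; rewrite Z in R2; lra).
      assert (X : zc v1 v2 (Wp v1 v2 (mu a1 a2 n * u1)) = zc v1 v2 (Wp v1 v2 (mu a1 a2 n * u2))) by (rewrite E; auto).
      rewrite !zc_W in X by (auto; apply Rmult_integral_contrapositive_currified; lra).
      apply (Rmult_eq_reg_l (mu a1 a2 n)); lra. }
    destruct (card_quad _ _ _ _ _ QA Hinj HS) as [A [B C]].
    split; [intro; apply A; auto|]. split; [intro; apply B; auto|]. intro; apply C; auto.
  - assert (HS : forall w, tau_set (Lp v1 v2 a1) (Lp v1 v2 a2) v1 v2 n P w <->
       exists u, Qa v1 v2 a1 a2 P n * u * u + Qb v1 v2 a1 a2 P n * u + Qc v1 P = 0 /\
                 w = Wp v1 v2 u).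
    { intro w. eapply tau_pos; eauto. }
    assert (Hinj : forall u1 u2, Qa v1 v2 a1 a2 P n * u1 * u1 + Qb v1 v2 a1 a2 P n * u1 + Qc v1 P = 0 ->
       Qa v1 v2 a1 a2 P n * u2 * u2 + Qb v1 v2 a1 a2 P n * u2 + Qc v1 P = 0 ->
       Wp v1 v2 u1 = Wp v1 v2 u2 -> u1 = u2).
    { intros u1 u2 R1 R2 E.
      assert (u1 <> 0) by (intro Z; rewrite Z in R1; lra).
      assert (u2 <> 0) by (intro Z; rewrite Z in R2; lra).
      assert (X : zc v1 v2 (Wp v1 v2 u1) = zc v1 v2 (Wp v1 v2 u2)) by (rewrite E; auto).
      rewrite !zc_W in X by auto. auto. }
    destruct (card_quad _ _ _ _ _ QA Hinj HS) as [A [B C]].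
    split; [intro; apply A; auto|]. split; [intro; apply B; auto|]. intro; apply C; auto.
Qed.
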